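(* For every set $\mathcal X$ of $n$ entities, each moving along a trajectory of $\tau$ edges (in general position), and every $\varepsilon\ge 0$, the Reeb graph $\mathcal R=(V,E)$ has $O(\tau n^2)$ vertices and $O(\tau n^2)$ edges. These bounds are tight in the worst case: there are inputs for which $\mathcal R$ has $\Omega(\tau n^2)$ vertices and edges.
   Context: Let $\mathcal X$ be a set of $n$ entities. All trajectories are sampled at common times $t_0<t_1<\dots<t_\tau$; each entity $x$ has a position $x(t_i)\in\mathbb R^2$ at each $t_i$ and moves with constant velocity between consecutive sample times, so its trajectory is a polygonal path with $\tau$ edges defined on $[t_0,t_\tau]$. Fix $\varepsilon\ge 0$. Two entities $x,y$ are directly connected at time $t$ if their closed discs of radius $\varepsilon$ centred at $x(t)$ and $y(t)$ intersect, i.e. $\|x(t)-y(t)\|\le 2\varepsilon$. They are $\varepsilon$-connected at time $t$ if there is a sequence $x=x_0,\dots,x_k=y$ of entities with $x_i,x_{i+1}$ directly connected at $t$ for all $i$. A component at time $t$ is a maximal set of pairwise $\varepsilon$-connected entities; the components at time $t$ partition $\mathcal X$. General position: no two distinct events at which a pair of entities becomes directly connected or directly disconnected occur at the same time. The Reeb graph $\mathcal R$ is the directed graph describing the evolution of the components over $[t_0,t_\tau]$: it has a start vertex for each component at $t_0$ (in-degree 0, out-degree 1), an end vertex for each component at $t_\tau$ (in-degree 1, out-degree 0), a merge vertex (in-degree 2, out-degree 1) at each time two components unite into one, and a split vertex (in-degree 1, out-degree 2) at each time a component splits into two; each vertex $v$ has a time $t_v$, and each edge $e=(u,v)$ with $t_u<t_v$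 corresponds to a set $C_e$ of entities that is a component at every time in $[t_u,t_v]$. *)

(* Defs.v *)
From Stdlib Require Import Reals Lra Lia List Relations.
Open Scope R_scope.

(* Input: n entities (indexed 0..n-1), tau edges per trajectory,        *)
(* sample times ts 0 < ts 1 < ... < ts tau, positions pts i x = x(t_i), *)

Section Trajectories.

Variables (n tau : nat) (ts : nat -> R) (pts : nat -> nat -> R * R) (eps : R).

Definition times_increasing : Prop :=
  forall i, (i < tau)%nat -> ts i < ts (S i).

(* position of entity x at time t, computed on the edge [ts i, ts (S i)]
   (constant velocity = linear interpolation) *)
Definition interp (i x : nat) (t : R) : R * R :=
  let p := pts i x in
  let q := pts (S i) x in
  let l := (t - ts i) / (ts (S i) - ts i) in
  (fst p + l * (fst q - fst p), snd p + l * (snd q - snd p)).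

(* the closed eps-discs centred at x(t) and y(t) intersect,
   i.e. ||x(t) - y(t)|| <= 2 eps (squared form; eps >= 0 is assumed) *)
Definition dconn (t : R) (x y : nat) : Prop :=
  exists i, (i < tau)%nat /\ ts i <= t <= ts (S i) /\
    let p := interp i x t in
    let q := interp i y t in
    (fst p - fst q) ^ 2 + (snd p - snd q) ^ 2 <= (2 * eps) ^ 2.

Definition conn (t : R) : relation nat :=
  clos_refl_trans nat (fun a b => (a < n)%nat /\ (b < n)%nat /\ dconn t a b).

Definition IsComp (t : R) (C : nat -> Prop) : Prop :=
  exists x, (x < n)%nat /\ forall y, C y <-> ((y < n)%nat /\ conn t x y).

Definition in_domain (t : R) : Prop := ts 0 <= t <= ts tau.

Definition becomes_connected (x y : nat) (t : R) : Prop :=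
  in_domain t /\ dconn t x y /\
  forall d, 0 < d -> exists s, in_domain s /\ t - d < s < t /\ ~ dconn s x y.

Definition becomes_disconnected (x y : nat) (t : R) : Prop :=
  in_domain t /\ dconn t x y /\
  forall d, 0 < d -> exists s, in_domain s /\ t < s < t + d /\ ~ dconn s x y.

Definition event (x y : nat) (b : bool) (t : R) : Prop :=
  (x < y)%nat /\ (y < n)%nat /\
  (if b then becomes_connected x y t else becomes_disconnected x y t).

Definition general_position : Prop :=
  (forall x y b t x' y' b' t',
      event x y b t -> event x' y' b' t' ->
      (x, y, b) <> (x', y', b') -> t <> t') /\
  (forall x y b t, event x y b t -> ts 0 < t < ts tau).

Inductive VKind := VStart | VEnd | VMerge | VSplit.

Record ReebGraph := {
  nv : nat;
  ne : nat;
  src : nat -> nat;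
  dst : nat -> nat;
  vtime : nat -> R;
  vkind : nat -> VKind;
  ecomp : nat -> nat -> Prop
}.

Definition outdeg (G : ReebGraph) (v : nat) : nat :=
  length (filter (fun e => Nat.eqb (src G e) v) (seq 0 (ne G))).
Definition indeg (G : ReebGraph) (v : nat) : nat :=
  length (filter (fun e => Nat.eqb (dst G e) v) (seq 0 (ne G))).

Definition sameset (A B : nat -> Prop) : Prop := forall y, A y <-> B y.

Definition IsReebGraph (G : ReebGraph) : Prop :=
  (forall e, (e < ne G)%nat ->
     (src G e < nv G)%nat /\ (dst G e < nv G)%nat /\
     vtime G (src G e) < vtime G (dst G e) /\
     forall t, vtime G (src G e) < t < vtime G (dst G e) ->
               IsComp t (ecomp G e)) /\
  (forall v, (v < nv G)%nat ->
     match vkind G v with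
     | VStart =>
         indeg G v = 0%nat /\ outdeg G v = 1%nat /\ vtime G v = ts 0 /\
         forall e, (e < ne G)%nat -> src G e = v -> IsComp (ts 0) (ecomp G e)
     | VEnd =>
         indeg G v = 1%nat /\ outdeg G v = 0%nat /\ vtime G v = ts tau /\
         forall e, (e < ne G)%nat -> dst G e = v -> IsComp (ts tau) (ecomp G e)
     | VMerge =>
         indeg G v = 2%nat /\ outdeg G v = 1%nat /\
         forall e1 e2 e3, (e1 < ne G)%nat -> (e2 < ne G)%nat -> (e3 < ne G)%nat ->
           e1 <> e2 -> dst G e1 = v -> dst G e2 = v -> src G e3 = v ->
           (forall y, ~ (ecomp G e1 y /\ ecomp G e2 y)) /\
           sameset (ecomp G e3) (fun y => ecomp G e1 y \/ ecomp G e2 y)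
     | VSplit =>
         indeg G v = 1%nat /\ outdeg G v = 2%nat /\
         forall e1 e2 e3, (e1 < ne G)%nat -> (e2 < ne G)%nat -> (e3 < ne G)%nat ->
           e1 <> e2 -> src G e1 = v -> src G e2 = v -> dst G e3 = v ->
           (forall y, ~ (ecomp G e1 y /\ ecomp G e2 y)) /\
           sameset (ecomp G e3) (fun y => ecomp G e1 y \/ ecomp G e2 y)
     end) /\
  (forall t C, in_domain t -> IsComp t C ->
     exists e, (e < ne G)%nat /\
       vtime G (src G e) <= t <= vtime G (dst G e) /\ sameset (ecomp G e) C) /\
  (forall e e' t, (e < ne G)%nat -> (e' < ne G)%nat -> e <> e' ->
     vtime G (src G e) < t < vtime G (dst G e) ->
     vtime G (src G e') < t < vtime G (dst G e') ->
     ~ sameset (ecomp G e) (ecomp G e')).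

End Trajectories.

(* Main.v *)
Require Import Defs.
From Stdlib Require Import Reals Lra Lia List Relations Arith Classical ClassicalEpsilon Bool Permutation.
Import ListNotations.
Open Scope nat_scope.

Lemma dm : forall a b d, (b < d)%nat -> (a * d + b) / d = a /\ (a * d + b) mod d = b.
Proof.
  intros a b d H. split.
  - symmetry. apply Nat.div_unique with b; lia.
  - symmetry. apply Nat.mod_unique with a; lia.
Qed.

Lemma dview : forall r d, d <> 0 -> r = (r / d) * d + r mod d /\ r mod d < d.
Proof.
  intros r d Hd. split; [|apply Nat.mod_upper_bound; auto].
  pose proof (Nat.div_mod_eq r d). lia.
Qed.

Lemma mai : forall x x' k i i', (i < k)%nat -> (i' < k)%nat -> (x * k + i = x' * k + i')%nat ->
  x = x' /\ i = i'.
Proof.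
  intros x x' k i i' Hi Hi' E.
  destruct (lt_eq_lt_dec x x') as [[H|H]|H].
  - exfalso. assert (x * k + k <= x' * k)%nat by nia. lia.
  - subst. lia.
  - exfalso. assert (x' * k + k <= x * k)%nat by nia. lia.
Qed.

Lemma even_S : forall i, Nat.even (S i) = negb (Nat.even i).
Proof. intros. rewrite Nat.even_succ, <- Nat.negb_even. auto. Qed.

Section Comb.
Variables (h w tau : nat).
Hypothesis Hh : 1 <= h.
Hypothesis Hw : 1 <= w.
Hypothesis Ht : 1 <= tau.

Definition S0 := h * w + 1.
Definition P := tau * h * w.
Definition code i j k := (i * h + j) * w + k.
Definition mk m := m mod w.
Definition mj m := (m / w) mod h.
Definition mi m := m / w / h.
Definition Tt j k := j + k * h + 1.
Definition cM i j k := i * S0 + (if Nat.even i then Tt j k else S0 - Tt j k).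
Definition cm m := cM (mi m) (mj m) (mk m).

Lemma decode_code : forall i j k, j < h -> k < w ->
  mi (code i j k) = i /\ mj (code i j k) = j /\ mk (code i j k) = k.
Proof.
  intros i j k Hj Hk. unfold mi, mj, mk, code.
  destruct (dm (i * h + j) k w Hk) as [E1 E2]. rewrite E1, E2.
  destruct (dm i j h Hj) as [E3 E4]. rewrite E3, E4. auto.
Qed.

Lemma code_decode : forall m, code (mi m) (mj m) (mk m) = m.
Proof.
  intros m. unfold code, mi, mj, mk.
  destruct (dview m w ltac:(lia)) as [E1 _].
  destruct (dview (m / w) h ltac:(lia)) as [E2 _]. lia.
Qed.

Lemma decode_bounds : forall m, m < P -> mi m < tau /\ mj m < h /\ mk m < w.
Proof.
  intros m Hm. unfold mi, mj, mk, P in *.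
  split; [|split; apply Nat.mod_upper_bound; lia].
  apply Nat.Div0.div_lt_upper_bound. apply Nat.Div0.div_lt_upper_bound. nia.
Qed.

Lemma code_lt : forall i j k, i < tau -> j < h -> k < w -> code i j k < P.
Proof. intros. unfold code, P. assert (i * h + j + 1 <= tau * h) by nia. assert ((i * h + j + 1) * w <= tau * h * w) by nia. nia. Qed.

Lemma Tt_bounds : forall j k, j < h -> k < w -> 1 <= Tt j k <= h * w.
Proof. intros. unfold Tt. nia. Qed.

Lemma cm_code : forall i j k, j < h -> k < w -> cm (code i j k) = cM i j k.
Proof. intros. unfold cm. destruct (decode_code i j k) as [-> [-> ->]]; auto. Qed.

Lemma cM_bounds : forall i j k, j < h -> k < w -> i * S0 + 1 <= cM i j k <= i * S0 + S0 - 1.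
Proof.
  intros i j k Hj Hk. pose proof (Tt_bounds j k Hj Hk). unfold cM, S0 in *.
  destruct (Nat.even i); lia.
Qed.

Lemma cm_bounds : forall m, m < P -> 1 <= cm m /\ cm m + 1 <= tau * S0.
Proof.
  intros m Hm. destruct (decode_bounds m Hm) as [Hi [Hj Hk]].
  unfold cm. pose proof (cM_bounds (mi m) (mj m) (mk m) Hj Hk). unfold S0 in *. nia.
Qed.

Lemma cm_inj : forall m m', m < P -> m' < P -> cm m = cm m' -> m = m'.
Proof.
  intros m m' Hm Hm' E.
  destruct (decode_bounds m Hm) as [Hi [Hj Hk]]. destruct (decode_bounds m' Hm') as [Hi' [Hj' Hk']].
  pose proof (Tt_bounds _ _ Hj Hk). pose proof (Tt_bounds _ _ Hj' Hk').
  unfold cm, cM in E.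
  assert (A : forall i j k, j < h -> k < w -> (if Nat.even i then Tt j k else S0 - Tt j k) < S0).
  { intros. pose proof (Tt_bounds j k H1 H2). unfold S0. destruct (Nat.even i); lia. }
  destruct (mai (mi m) (mi m') S0 _ _ (A _ _ _ Hj Hk) (A _ _ _ Hj' Hk') E) as [Ei EM].
  rewrite Ei in EM. assert (ET : Tt (mj m) (mk m) = Tt (mj m') (mk m')).
  { unfold S0 in *. destruct (Nat.even (mi m')); lia. }
  unfold Tt in ET. assert (mk m * h + mj m = mk m' * h + mj m') by lia.
  destruct (mai _ _ _ _ _ Hj Hj' H1) as [Ek Ej].
  rewrite <- (code_decode m), <- (code_decode m'). congruence.
Qed.

Definition kf d i q := if Nat.even i then q else d - 1 - q.

Lemma kf_lt : forall d i q, q < d -> kf d i q < d.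
Proof. intros. unfold kf. destruct (Nat.even i); lia. Qed.

Lemma kf_inv : forall d i q, q < d -> kf d i (kf d i q) = q.
Proof. intros. unfold kf. destruct (Nat.even i); lia. Qed.

Definition rankA m := mi m * w + kf w (mi m) (mk m).
Definition meetA j r := code (r / w) j (kf w (r / w) (r mod w)).
Definition rankB m := mi m * h + kf h (mi m) (mj m).
Definition meetB k r := code (r / h) (kf h (r / h) (r mod h)) k.

Lemma A1 : forall j r, j < h -> r < tau * w -> meetA j r < P /\ mj (meetA j r) = j.
Proof.
  intros j r Hj Hr. destruct (dview r w ltac:(lia)) as [Er Hq].
  assert (r / w < tau) by (apply Nat.Div0.div_lt_upper_bound; nia).
  unfold meetA. split.
  - apply code_lt; auto; apply kf_lt; auto.
  - apply decode_code; auto; apply kf_lt; auto.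
Qed.

Lemma A2 : forall m, m < P -> rankA m < tau * w /\ meetA (mj m) (rankA m) = m.
Proof.
  intros m Hm. destruct (decode_bounds m Hm) as [Hi [Hj Hk]].
  pose proof (kf_lt w (mi m) (mk m) Hk).
  split; [unfold rankA; nia|].
  unfold meetA, rankA. destruct (dm (mi m) (kf w (mi m) (mk m)) w H) as [E1 E2].
  rewrite E1, E2, kf_inv by auto. apply code_decode.
Qed.

Lemma A3 : forall j r, j < h -> r < tau * w -> rankA (meetA j r) = r.
Proof.
  intros j r Hj Hr. destruct (dview r w ltac:(lia)) as [Er Hq].
  unfold rankA, meetA.
  destruct (decode_code (r / w) j (kf w (r / w) (r mod w)) Hj (kf_lt _ _ _ Hq)) as [-> [_ ->]].
  rewrite kf_inv; auto; lia.
Qed.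

Lemma B1 : forall k r, k < w -> r < tau * h -> meetB k r < P /\ mk (meetB k r) = k.
Proof.
  intros k r Hk Hr. destruct (dview r h ltac:(lia)) as [Er Hq].
  assert (r / h < tau) by (apply Nat.Div0.div_lt_upper_bound; nia).
  unfold meetB. split.
  - apply code_lt; auto; apply kf_lt; auto.
  - apply decode_code; auto; apply kf_lt; auto.
Qed.

Lemma B2 : forall m, m < P -> rankB m < tau * h /\ meetB (mk m) (rankB m) = m.
Proof.
  intros m Hm. destruct (decode_bounds m Hm) as [Hi [Hj Hk]].
  pose proof (kf_lt h (mi m) (mj m) Hj).
  split; [unfold rankB; nia|].
  unfold meetB, rankB. destruct (dm (mi m) (kf h (mi m) (mj m)) h H) as [E1 E2].
  rewrite E1, E2, kf_inv by auto. apply code_decode.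
Qed.

Lemma B3 : forall k r, k < w -> r < tau * h -> rankB (meetB k r) = r.
Proof.
  intros k r Hk Hr. destruct (dview r h ltac:(lia)) as [Er Hq].
  unfold rankB, meetB.
  destruct (decode_code (r / h) (kf h (r / h) (r mod h)) k (kf_lt _ _ _ Hq) Hk) as [-> [-> _]].
  rewrite kf_inv; auto; lia.
Qed.

Lemma succ_view : forall r d, d <> 0 ->
  (r mod d + 1 < d /\ (r + 1) / d = r / d /\ (r + 1) mod d = r mod d + 1) \/
  (r mod d = d - 1 /\ (r + 1) / d = r / d + 1 /\ (r + 1) mod d = 0).
Proof.
  intros r d Hd. destruct (dview r d Hd) as [Er Hq].
  destruct (Nat.lt_ge_cases (r mod d + 1) d) as [H|H].
  - left. split; auto. replace (r + 1) with (r / d * d + (r mod d + 1)) by lia.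
    apply dm; auto.
  - right. split; [lia|]. replace (r + 1) with ((r / d + 1) * d + 0) by nia.
    apply dm; lia.
Qed.

Lemma A4 : forall j r, j < h -> r + 1 < tau * w -> cm (meetA j r) < cm (meetA j (r + 1)).
Proof.
  intros j r Hj Hr. unfold meetA.
  destruct (dview r w ltac:(lia)) as [Er Hq].
  rewrite !cm_code; auto; try (apply kf_lt; apply Nat.mod_upper_bound; lia).
  unfold cM, kf, Tt, S0.
  destruct (succ_view r w ltac:(lia)) as [[H1 [-> ->]]|[H1 [-> ->]]].
  - destruct (Nat.even (r / w)); nia.
  - rewrite H1. replace (r / w + 1) with (S (r / w)) by lia. rewrite even_S.
    destruct (Nat.even (r / w)); simpl; nia.
Qed.

Lemma B4 : forall k r, k < w -> r + 1 < tau * h -> cm (meetB k r) < cm (meetB k (r + 1)).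
Proof.
  intros k r Hk Hr. unfold meetB.
  destruct (dview r h ltac:(lia)) as [Er Hq].
  rewrite !cm_code; auto; try (apply kf_lt; apply Nat.mod_upper_bound; lia).
  unfold cM, kf, Tt, S0.
  destruct (succ_view r h ltac:(lia)) as [[H1 [-> ->]]|[H1 [-> ->]]].
  - destruct (Nat.even (r / h)); nia.
  - rewrite H1. replace (r / h + 1) with (S (r / h)) by lia. rewrite even_S.
    destruct (Nat.even (r / h)); simpl; nia.
Qed.

End Comb.


Section Ent.
Variables (h w tau : nat).
Hypothesis Hh : 1 <= h.
Hypothesis Hw : 1 <= w.
Hypothesis Ht : 1 <= tau.

Definition Rx x := if x <? h then tau * w else tau * h.
Definition meetx x r := if x <? h then meetA h w x r else meetB h w (x - h) r.
Definition rankx x m := if x <? h then rankA h w m else rankB h w m.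
Definition inpair m x := x = mj h w m \/ x = h + mk w m.

Lemma Rx_pos : forall x, 1 <= Rx x.
Proof. intros. unfold Rx. destruct (x <? h); nia. Qed.

Lemma G1 : forall x r, x < h + w -> r < Rx x -> meetx x r < P h w tau /\ inpair (meetx x r) x.
Proof.
  intros x r Hx Hr. unfold Rx, meetx, inpair in *. destruct (x <? h) eqn:E.
  - apply Nat.ltb_lt in E. destruct (A1 h w tau Hh Hw Ht x r E Hr). split; auto.
  - apply Nat.ltb_ge in E. destruct (B1 h w tau Hh Hw Ht (x - h) r ltac:(lia) Hr). split; auto. lia.
Qed.

Lemma G2 : forall m x, m < P h w tau -> x < h + w -> inpair m x ->
  rankx x m < Rx x /\ meetx x (rankx x m) = m.
Proof.
  intros m x Hm Hx Hp. destruct (decode_bounds h w tau Hh Hw Ht m Hm) as [Hi [Hj Hk]].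
  unfold Rx, meetx, rankx, inpair in *. destruct (x <? h) eqn:E.
  - apply Nat.ltb_lt in E. assert (x = mj h w m) by lia. subst x. apply (A2 h w tau Hh Hw Ht); auto.
  - apply Nat.ltb_ge in E. assert (x - h = mk w m) by lia. rewrite H. apply (B2 h w tau Hh Hw Ht); auto.
Qed.

Lemma G3 : forall x r, x < h + w -> r < Rx x -> rankx x (meetx x r) = r.
Proof.
  intros x r Hx Hr. unfold Rx, meetx, rankx in *. destruct (x <? h) eqn:E.
  - apply Nat.ltb_lt in E. apply (A3 h w tau Hh Hw Ht); auto.
  - apply Nat.ltb_ge in E. apply (B3 h w tau Hh Hw Ht); auto. lia.
Qed.

Lemma G4 : forall x r, x < h + w -> r + 1 < Rx x ->
  cm h w (meetx x r) < cm h w (meetx x (r + 1)).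
Proof.
  intros x r Hx Hr. unfold Rx, meetx in *. destruct (x <? h) eqn:E.
  - apply Nat.ltb_lt in E. apply (A4 h w tau Hh Hw Ht); auto.
  - apply Nat.ltb_ge in E. apply (B4 h w tau Hh Hw Ht); auto. lia.
Qed.

Lemma G5 : forall x r r', x < h + w -> r < r' -> r' < Rx x ->
  cm h w (meetx x r) < cm h w (meetx x r').
Proof.
  intros x r r' Hx Hrr Hr'. induction r' as [|r' IH]; [lia|].
  replace (S r') with (r' + 1) by lia.
  destruct (Nat.eq_dec r r') as [->|Hne].
  - apply G4; auto; lia.
  - eapply Nat.lt_trans; [apply IH; lia|]. apply G4; auto; lia.
Qed.

Lemma G5le : forall x r r', x < h + w -> r <= r' -> r' < Rx x ->
  cm h w (meetx x r) <= cm h w (meetx x r').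
Proof.
  intros. destruct (Nat.eq_dec r r') as [->|]; [lia|]. apply Nat.lt_le_incl, G5; auto; lia.
Qed.

End Ent.

Open Scope R_scope.

Section Basic.
Variables (n tau : nat) (ts : nat -> R) (pts : nat -> nat -> R * R) (eps : R).
Hypothesis Hinc : times_increasing tau ts.

Lemma ts_mono : forall i j, (i < j)%nat -> (j <= tau)%nat -> ts i < ts j.
Proof.
  intros i j Hij Hj. induction j as [|j IH]; [lia|].
  assert (ts j < ts (S j)) by (apply Hinc; lia).
  destruct (Nat.eq_dec i j) as [->|Hne]; [lra|].
  assert (ts i < ts j) by (apply IH; lia). lra.
Qed.

Lemma ts_le : forall i j, (i <= j)%nat -> (j <= tau)%nat -> ts i <= ts j.
Proof.
  intros i j Hij Hj. destruct (Nat.eq_dec i j) as [->|]; [lra|].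
  left; apply ts_mono; lia.
Qed.

Definition F (i a b : nat) (t : R) : R :=
  let p := interp ts pts i a t in
  let q := interp ts pts i b t in
  (fst p - fst q) ^ 2 + (snd p - snd q) ^ 2.

Definition seg (i : nat) (t : R) := ts i <= t <= ts (S i).

Lemma dconn_iff : forall t a b,
  dconn tau ts pts eps t a b <-> exists i, (i < tau)%nat /\ seg i t /\ F i a b t <= (2*eps)^2.
Proof. intros. unfold dconn, F, seg. tauto. Qed.

Lemma seg_unique : forall i j t, (i < tau)%nat -> (j < tau)%nat -> seg i t -> seg j t ->
  i = j \/ (j = S i /\ t = ts (S i)) \/ (i = S j /\ t = ts (S j)).
Proof.
  unfold seg; intros i j t Hi Hj [H1 H2] [H3 H4].
  destruct (lt_eq_lt_dec i j) as [[Hlt|Heq]|Hgt]; auto.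
  - destruct (Nat.eq_dec j (S i)) as [->|Hne].
    + right; left; split; auto; lra.
    + assert (ts (S i) < ts j) by (apply ts_mono; lia). lra.
  - destruct (Nat.eq_dec i (S j)) as [->|Hne].
    + right; right; split; auto; lra.
    + assert (ts (S j) < ts i) by (apply ts_mono; lia). lra.
Qed.

Lemma interp_start : forall i x, interp ts pts i x (ts i) = pts i x.
Proof.
  intros. unfold interp. destruct (pts i x) as [p1 p2]. simpl.
  f_equal; unfold Rdiv; ring.
Qed.

Lemma interp_end : forall i x, (i < tau)%nat -> interp ts pts i x (ts (S i)) = pts (S i) x.
Proof.
  intros. unfold interp. assert (ts i < ts (S i)) by (apply Hinc; auto).
  destruct (pts i x) as [p1 p2]; destruct (pts (S i) x) as [q1 q2]; simpl.
  f_equal; field; lra.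
Qed.

Lemma interp_seg : forall i j x t, (i < tau)%nat -> (j < tau)%nat -> seg i t -> seg j t ->
  interp ts pts i x t = interp ts pts j x t.
Proof.
  intros i j x t Hi Hj Si Sj.
  destruct (seg_unique i j t Hi Hj Si Sj) as [->|[[-> ->]|[-> ->]]]; auto.
  - rewrite interp_end by auto. rewrite interp_start. auto.
  - rewrite interp_end by auto. rewrite interp_start. auto.
Qed.

Lemma F_seg : forall i j a b t, (i < tau)%nat -> (j < tau)%nat -> seg i t -> seg j t ->
  F i a b t = F j a b t.
Proof.
  intros. unfold F. rewrite (interp_seg i j a t), (interp_seg i j b t); auto.
Qed.

Lemma dconn_seg : forall i a b t, (i < tau)%nat -> seg i t ->
  (dconn tau ts pts eps t a b <-> F i a b t <= (2*eps)^2).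
Proof.
  intros i a b t Hi Si. rewrite dconn_iff. split.
  - intros [j [Hj [Sj HF]]]. rewrite (F_seg i j); auto.
  - intros HF. exists i; auto.
Qed.

Lemma dconn_sym : forall t a b, dconn tau ts pts eps t a b -> dconn tau ts pts eps t b a.
Proof.
  intros t a b. rewrite !dconn_iff. intros [i [Hi [Si HF]]]. exists i; split; [auto|split; [auto|]].
  unfold F in *. eapply Rle_trans; [|exact HF]; right; ring.
Qed.

Definition gq (A B C D u : R) := (A + u*B)^2 + (C + u*D)^2.

Lemma gq_convex : forall A B C D u1 u u2 c, u1 <= u <= u2 ->
  gq A B C D u1 <= c -> gq A B C D u2 <= c -> gq A B C D u <= c.
Proof.
  intros A B C D u1 u u2 c [H1 H2] G1 G2.
  destruct (Req_dec u1 u2) as [E|E].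
  - assert (u = u1) by lra. subst; auto.
  - assert (Hid : (u2 - u1) * gq A B C D u =
       (u2 - u) * gq A B C D u1 + (u - u1) * gq A B C D u2
       - (u - u1) * (u2 - u) * (u2 - u1) * (B^2 + D^2)) by (unfold gq; ring).
    assert (P : 0 <= (u - u1) * (u2 - u) * (u2 - u1) * (B^2 + D^2)).
    { apply Rmult_le_pos; [|nra]. apply Rmult_le_pos; [|lra]. apply Rmult_le_pos; lra. }
    assert (Q : (u2 - u) * gq A B C D u1 + (u - u1) * gq A B C D u2 <= (u2 - u1) * c).
    { assert ((u2 - u) * gq A B C D u1 <= (u2 - u) * c) by (apply Rmult_le_compat_l; lra).
      assert ((u - u1) * gq A B C D u2 <= (u - u1) * c) by (apply Rmult_le_compat_l; lra).
      lra. }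
    assert (Hp : 0 < u2 - u1) by lra.
    apply (Rmult_le_reg_l (u2 - u1)); auto. lra.
Qed.

Lemma gq_cont : forall A B C D u0 c, gq A B C D u0 > c ->
  exists d, 0 < d /\ forall u, Rabs (u - u0) < d -> gq A B C D u > c.
Proof.
  intros A B C D u0 c H.
  set (M := 2 * Rabs (A*B + C*D) + (2 * Rabs u0 + 1) * (B^2 + D^2) + 1).
  assert (HM : 1 <= M).
  { unfold M. assert (0 <= Rabs (A*B+C*D)) by apply Rabs_pos.
    assert (0 <= Rabs u0) by apply Rabs_pos. nra. }
  set (e := gq A B C D u0 - c).
  exists (Rmin 1 (e / M)). split.
  { apply Rmin_pos; [lra|]. unfold e; apply Rdiv_lt_0_compat; lra. }
  intros u Hu.
  assert (Hu1 : Rabs (u - u0) < 1) by (eapply Rlt_le_trans; [exact Hu|apply Rmin_l]).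
  assert (Hu2 : Rabs (u - u0) < e / M) by (eapply Rlt_le_trans; [exact Hu|apply Rmin_r]).
  assert (Hdiff : gq A B C D u - gq A B C D u0 =
     (u - u0) * (2 * (A*B + C*D) + (u + u0) * (B^2 + D^2))) by (unfold gq; ring).
  assert (Hb : Rabs (2 * (A*B + C*D) + (u + u0) * (B^2 + D^2)) <= M).
  { eapply Rle_trans; [apply Rabs_triang|].
    rewrite Rabs_mult. rewrite (Rabs_mult (u+u0)).
    assert (Rabs 2 = 2) by (apply Rabs_right; lra).
    assert (Rabs (B^2 + D^2) = B^2 + D^2) by (apply Rabs_right; nra).
    assert (Rabs (u + u0) <= 2 * Rabs u0 + 1).
    { replace (u + u0) with ((u - u0) + 2 * u0) by ring.
      eapply Rle_trans; [apply Rabs_triang|]. rewrite Rabs_mult.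
      rewrite H0. lra. }
    rewrite H0, H1. unfold M.
    assert (0 <= B^2 + D^2) by nra. nra. }
  assert (Habs : Rabs (gq A B C D u - gq A B C D u0) < e).
  { rewrite Hdiff, Rabs_mult.
    assert (0 <= Rabs (u - u0)) by apply Rabs_pos.
    assert (Rabs (u - u0) * Rabs (2 * (A*B + C*D) + (u + u0) * (B^2 + D^2)) <= Rabs (u - u0) * M)
      by (apply Rmult_le_compat_l; auto).
    assert (Rabs (u - u0) * M < e).
    { apply (Rmult_lt_reg_r (/ M)). apply Rinv_0_lt_compat; lra.
      rewrite Rmult_assoc, Rinv_r by lra. unfold Rdiv in Hu2. lra. }
    lra. }
  apply Rabs_def2 in Habs. unfold e in Habs. lra.
Qed.

Lemma F_gq : forall i a b t,
  F i a b t = gq (fst (pts i a) - fst (pts i b))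
                 (((fst (pts (S i) a) - fst (pts i a)) - (fst (pts (S i) b) - fst (pts i b))) / (ts (S i) - ts i))
                 (snd (pts i a) - snd (pts i b))
                 (((snd (pts (S i) a) - snd (pts i a)) - (snd (pts (S i) b) - snd (pts i b))) / (ts (S i) - ts i))
                 (t - ts i).
Proof. intros. unfold F, gq, interp. simpl. unfold Rdiv. ring. Qed.

Lemma F_convex : forall i a b t1 s t2 c, t1 <= s <= t2 ->
  F i a b t1 <= c -> F i a b t2 <= c -> F i a b s <= c.
Proof.
  intros i a b t1 s t2 c Hs H1 H2. rewrite F_gq in *.
  eapply gq_convex; [|exact H1|exact H2]. lra.
Qed.

Lemma F_cont : forall i a b t c, F i a b t > c ->
  exists d, 0 < d /\ forall s, Rabs (s - t) < d -> F i a b s > c.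
Proof.
  intros i a b t c H. rewrite F_gq in H. apply gq_cont in H.
  destruct H as [d [Hd H]]. exists d; split; auto. intros s Hs. rewrite F_gq. apply H.
  replace (s - ts i - (t - ts i)) with (s - t) by ring. auto.
Qed.

Lemma find_seg_r : forall t, ts 0 <= t < ts tau ->
  exists i, (i < tau)%nat /\ ts i <= t < ts (S i).
Proof.
  intros t Ht.
  assert (forall k, (k <= tau)%nat -> ts 0 <= t < ts k -> exists i, (i < k)%nat /\ ts i <= t < ts (S i)).
  { induction k as [|k IH]; intros Hk Hk2; [lra|].
    destruct (Rlt_le_dec t (ts k)) as [Hl|Hl].
    - destruct k as [|k]; [lra|]. destruct (IH ltac:(lia) ltac:(lra)) as [i [? ?]].
      exists i; split; auto; lia.
    - exists k; split; auto; lra. }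
  destruct (H tau (le_n _) Ht) as [i [? ?]]. exists i; auto.
Qed.

Lemma find_seg_l : forall t, ts 0 < t <= ts tau ->
  exists i, (i < tau)%nat /\ ts i < t <= ts (S i).
Proof.
  intros t Ht.
  assert (forall k, (k <= tau)%nat -> ts 0 < t <= ts k -> exists i, (i < k)%nat /\ ts i < t <= ts (S i)).
  { induction k as [|k IH]; intros Hk Hk2; [lra|].
    destruct (Rle_lt_dec t (ts k)) as [Hl|Hl].
    - destruct k as [|k]; [lra|]. destruct (IH ltac:(lia) ltac:(lra)) as [i [? ?]].
      exists i; split; auto; lia.
    - exists k; split; auto; lra. }
  destruct (H tau (le_n _) Ht) as [i [? ?]]. exists i; auto.
Qed.

Lemma find_seg : forall t, in_domain tau ts t -> (1 <= tau)%nat ->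
  exists i, (i < tau)%nat /\ seg i t.
Proof.
  intros t [H1 H2] Ht. destruct (Rlt_le_dec t (ts tau)).
  - destruct (find_seg_r t) as [i [? ?]]; [lra|]. exists i; split; auto; unfold seg; lra.
  - exists (pred tau). split; [lia|]. unfold seg. replace (S (pred tau)) with tau by lia.
    split; [|lra]. apply Rle_trans with (ts tau); [apply ts_le; lia|lra].
Qed.

Lemma dconn_out : forall t a b, t < ts 0 \/ ts tau < t -> ~ dconn tau ts pts eps t a b.
Proof.
  intros t a b Ht H. rewrite dconn_iff in H. destruct H as [i [Hi [[S1 S2] _]]].
  assert (ts 0 <= ts i) by (apply ts_le; lia).
  assert (ts (S i) <= ts tau) by (apply ts_le; lia). lra.
Qed.

Lemma dconn_refl : forall t a, in_domain tau ts t -> (1 <= tau)%nat -> dconn tau ts pts eps t a a.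
Proof.
  intros t a Hd Ht. destruct (find_seg t Hd Ht) as [i [Hi Si]].
  rewrite dconn_iff. exists i; split; auto; split; auto.
  unfold F. simpl. nra.
Qed.

Lemma right_germ : forall t a b, ts 0 <= t < ts tau ->
  exists d, 0 < d /\ ((forall s, t < s < t + d -> dconn tau ts pts eps s a b) \/
                      (forall s, t < s < t + d -> ~ dconn tau ts pts eps s a b)).
Proof.
  intros t a b Ht. destruct (find_seg_r t Ht) as [i [Hi [Hi1 Hi2]]].
  set (c := (2*eps)^2).
  assert (Hs : forall s, t < s < ts (S i) -> (dconn tau ts pts eps s a b <-> F i a b s <= c)).
  { intros s Hs. apply dconn_seg; auto. unfold seg; lra. }
  destruct (classic (exists s1, t < s1 < ts (S i) /\ F i a b s1 <= c)) as [[s1 [Hs1 F1]]|N1].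
  - destruct (classic (exists s0, t < s0 < s1 /\ ~ F i a b s0 <= c)) as [[s0 [Hs0 F0]]|N0].
    + exists (s0 - t). split; [lra|]. right. intros s Hs' D.
      apply (Hs s) in D; [|lra]. apply F0. eapply F_convex; [|exact D|exact F1]. lra.
    + exists (s1 - t). split; [lra|]. left. intros s Hs'. apply Hs; [lra|].
      apply NNPP. intro N. apply N0. exists s; split; auto; lra.
  - exists (ts (S i) - t). split; [lra|]. right. intros s Hs' D.
    apply N1. exists s; split; [lra|]. apply Hs; auto; lra.
Qed.

Lemma left_germ : forall t a b, ts 0 < t <= ts tau ->
  exists d, 0 < d /\ ((forall s, t - d < s < t -> dconn tau ts pts eps s a b) \/
                      (forall s, t - d < s < t -> ~ dconn tau ts pts eps s a b)).
Proof.
  intros t a b Ht. destruct (find_seg_l t Ht) as [i [Hi [Hi1 Hi2]]].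
  set (c := (2*eps)^2).
  assert (Hs : forall s, ts i < s < t -> (dconn tau ts pts eps s a b <-> F i a b s <= c)).
  { intros s Hs. apply dconn_seg; auto. unfold seg; lra. }
  destruct (classic (exists s1, ts i < s1 < t /\ F i a b s1 <= c)) as [[s1 [Hs1 F1]]|N1].
  - destruct (classic (exists s0, s1 < s0 < t /\ ~ F i a b s0 <= c)) as [[s0 [Hs0 F0]]|N0].
    + exists (t - s0). split; [lra|]. right. intros s Hs' D.
      apply (Hs s) in D; [|lra]. apply F0. eapply F_convex; [|exact F1|exact D]. lra.
    + exists (t - s1). split; [lra|]. left. intros s Hs'. apply Hs; [lra|].
      apply NNPP. intro N. apply N0. exists s; split; auto; lra.
  - exists (t - ts i). split; [lra|]. right. intros s Hs' D.
    apply N1. exists s; split; [lra|]. apply Hs; auto; lra.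
Qed.

Lemma closure_right : forall t a b d, ts 0 <= t < ts tau -> 0 < d ->
  (forall s, t < s < t + d -> dconn tau ts pts eps s a b) -> dconn tau ts pts eps t a b.
Proof.
  intros t a b d Ht Hd H. destruct (find_seg_r t Ht) as [i [Hi [Hi1 Hi2]]].
  rewrite (dconn_seg i); auto; [|unfold seg; lra].
  apply Rnot_lt_le. intro Hc. destruct (F_cont i a b t _ Hc) as [d1 [Hd1 Hc1]].
  set (s := t + Rmin d (Rmin d1 (ts (S i) - t)) / 2).
  assert (0 < Rmin d (Rmin d1 (ts (S i) - t))) by (repeat apply Rmin_pos; lra).
  assert (Rmin d (Rmin d1 (ts (S i) - t)) <= d) by apply Rmin_l.
  assert (Rmin d (Rmin d1 (ts (S i) - t)) <= d1) by (eapply Rle_trans; [apply Rmin_r|apply Rmin_l]).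
  assert (Rmin d (Rmin d1 (ts (S i) - t)) <= ts (S i) - t) by (eapply Rle_trans; [apply Rmin_r|apply Rmin_r]).
  assert (Hs : t < s < t + d) by (unfold s; lra).
  specialize (H s Hs). rewrite (dconn_seg i) in H; auto; [|unfold seg, s; lra].
  assert (Rabs (s - t) < d1) by (rewrite Rabs_right; unfold s; lra).
  specialize (Hc1 s H4). lra.
Qed.

Lemma closure_left : forall t a b d, ts 0 < t <= ts tau -> 0 < d ->
  (forall s, t - d < s < t -> dconn tau ts pts eps s a b) -> dconn tau ts pts eps t a b.
Proof.
  intros t a b d Ht Hd H. destruct (find_seg_l t Ht) as [i [Hi [Hi1 Hi2]]].
  rewrite (dconn_seg i); auto; [|unfold seg; lra].
  apply Rnot_lt_le. intro Hc. destruct (F_cont i a b t _ Hc) as [d1 [Hd1 Hc1]].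
  set (m := Rmin d (Rmin d1 (t - ts i))).
  assert (0 < m) by (unfold m; repeat apply Rmin_pos; lra).
  assert (m <= d) by apply Rmin_l.
  assert (m <= d1) by (eapply Rle_trans; [apply Rmin_r|apply Rmin_l]).
  assert (m <= t - ts i) by (eapply Rle_trans; [apply Rmin_r|apply Rmin_r]).
  set (s := t - m / 2).
  assert (Hs : t - d < s < t) by (unfold s; lra).
  specialize (H s Hs). rewrite (dconn_seg i) in H; auto; [|unfold seg, s; lra].
  assert (Rabs (s - t) < d1) by (rewrite Rabs_left; unfold s; lra).
  specialize (Hc1 s H4). lra.
Qed.

Definition Plus t a b := exists d, 0 < d /\ forall s, t < s < t + d -> dconn tau ts pts eps s a b.
Definition Minus t a b := exists d, 0 < d /\ forall s, t - d < s < t -> dconn tau ts pts eps s a b.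

Lemma fin_min : forall (W : nat -> R -> Prop) m,
  (forall a d d', 0 < d' <= d -> W a d -> W a d') ->
  (forall a, (a < m)%nat -> exists d, 0 < d /\ W a d) ->
  exists d, 0 < d /\ forall a, (a < m)%nat -> W a d.
Proof.
  intros W m Hmon. induction m as [|m IH]; intros H.
  - exists 1; split; [lra|]. intros; lia.
  - destruct IH as [d1 [Hd1 H1]]. { intros a Ha; apply H; lia. }
    destruct (H m (Nat.lt_succ_diag_r m)) as [d2 [Hd2 H2]].
    exists (Rmin d1 d2). split; [apply Rmin_pos; auto|].
    intros a Ha. destruct (Nat.eq_dec a m) as [->|Hne].
    + eapply Hmon; [|exact H2]. split; [apply Rmin_pos; auto|apply Rmin_r].
    + eapply Hmon; [|apply H1; lia]. split; [apply Rmin_pos; auto|apply Rmin_l].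
Qed.

Lemma pair_right : forall t a b, ts 0 <= t < ts tau ->
  exists d, 0 < d /\ forall s, t < s < t + d -> (dconn tau ts pts eps s a b <-> Plus t a b).
Proof.
  intros t a b Ht. destruct (right_germ t a b Ht) as [d [Hd [H|H]]].
  - exists d; split; auto. intros s Hs; split; auto. intros _. exists d; auto.
  - exists d; split; auto. intros s Hs; split; [intro D; exfalso; eapply H; eauto|].
    intros [d' [Hd' H']]. exfalso.
    apply (H (t + Rmin d d' / 2)).
    { assert (0 < Rmin d d') by (apply Rmin_pos; auto). assert (Rmin d d' <= d) by apply Rmin_l. lra. }
    apply H'. assert (0 < Rmin d d') by (apply Rmin_pos; auto). assert (Rmin d d' <= d') by apply Rmin_r. lra.
Qed.

Lemma pair_left : forall t a b, ts 0 < t <= ts tau ->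
  exists d, 0 < d /\ forall s, t - d < s < t -> (dconn tau ts pts eps s a b <-> Minus t a b).
Proof.
  intros t a b Ht. destruct (left_germ t a b Ht) as [d [Hd [H|H]]].
  - exists d; split; auto. intros s Hs; split; auto. intros _. exists d; auto.
  - exists d; split; auto. intros s Hs; split; [intro D; exfalso; eapply H; eauto|].
    intros [d' [Hd' H']]. exfalso.
    apply (H (t - Rmin d d' / 2)).
    { assert (0 < Rmin d d') by (apply Rmin_pos; auto). assert (Rmin d d' <= d) by apply Rmin_l. lra. }
    apply H'. assert (0 < Rmin d d') by (apply Rmin_pos; auto). assert (Rmin d d' <= d') by apply Rmin_r. lra.
Qed.

Lemma uniform_right : forall t, ts 0 <= t < ts tau ->
  exists d, 0 < d /\ forall a b, (a < n)%nat -> (b < n)%nat -> forall s, t < s < t + d ->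
    (dconn tau ts pts eps s a b <-> Plus t a b).
Proof.
  intros t Ht.
  destruct (fin_min (fun a d => forall b, (b < n)%nat -> forall s, t < s < t + d ->
    (dconn tau ts pts eps s a b <-> Plus t a b)) n) as [d [Hd H]].
  - intros a d d' Hd' W b Hb s Hs. apply W; auto; lra.
  - intros a Ha. destruct (fin_min (fun b d => forall s, t < s < t + d ->
      (dconn tau ts pts eps s a b <-> Plus t a b)) n) as [d [Hd H]].
    + intros b d d' Hd' W s Hs. apply W; lra.
    + intros b Hb. apply pair_right; auto.
    + exists d; split; auto.
  - exists d; split; auto.
Qed.

Lemma uniform_left : forall t, ts 0 < t <= ts tau ->
  exists d, 0 < d /\ forall a b, (a < n)%nat -> (b < n)%nat -> forall s, t - d < s < t ->
    (dconn tau ts pts eps s a b <-> Minus t a b).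
Proof.
  intros t Ht.
  destruct (fin_min (fun a d => forall b, (b < n)%nat -> forall s, t - d < s < t ->
    (dconn tau ts pts eps s a b <-> Minus t a b)) n) as [d [Hd H]].
  - intros a d d' Hd' W b Hb s Hs. apply W; auto; lra.
  - intros a Ha. destruct (fin_min (fun b d => forall s, t - d < s < t ->
      (dconn tau ts pts eps s a b <-> Minus t a b)) n) as [d [Hd H]].
    + intros b d d' Hd' W s Hs. apply W; lra.
    + intros b Hb. apply pair_left; auto.
    + exists d; split; auto.
  - exists d; split; auto.
Qed.

Lemma rt_mono : forall (R1 R2 : relation nat), (forall a b, R1 a b -> R2 a b) ->
  forall x y, clos_refl_trans nat R1 x y -> clos_refl_trans nat R2 x y.
Proof.
  intros R1 R2 H x y Hr. induction Hr; [apply rt_step; auto|apply rt_refl|eapply rt_trans; eauto].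
Qed.

Lemma rt_diff : forall (R1 R2 : relation nat) x y, clos_refl_trans nat R1 x y ->
  ~ clos_refl_trans nat R2 x y -> exists p q, R1 p q /\ ~ R2 p q /\ clos_refl_trans nat R1 x p.
Proof.
  intros R1 R2 x y Hr. apply clos_rt_rt1n in Hr. induction Hr as [x|x z y Hxz Hzy IH]; intros N.
  - exfalso; apply N; apply rt_refl.
  - destruct (classic (R2 x z)) as [H2|H2].
    + destruct IH as [p [q [A [B C]]]].
      { intro C; apply N. eapply rt_trans; [apply rt_step; exact H2|exact C]. }
      exists p, q; split; auto; split; auto. eapply rt_trans; [apply rt_step; exact Hxz|exact C].
    + exists x, z; split; auto; split; auto. apply rt_refl.
Qed.

Lemma conn_const : forall s (P : nat -> nat -> Prop),
  (forall a b, (a < n)%nat -> (b < n)%nat -> (dconn tau ts pts eps s a b <-> P a b)) ->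
  forall x y, conn n tau ts pts eps s x y <->
    clos_refl_trans nat (fun a b => (a < n)%nat /\ (b < n)%nat /\ P a b) x y.
Proof.
  intros s P H x y. unfold conn. split; apply rt_mono; intros a b [Ha [Hb D]];
    repeat split; auto; apply (H a b Ha Hb); auto.
Qed.

Lemma conn_sym : forall t x y, conn n tau ts pts eps t x y -> conn n tau ts pts eps t y x.
Proof.
  intros t x y H. unfold conn in *. induction H.
  - apply rt_step. destruct H as [? [? ?]]. repeat split; auto. apply dconn_sym; auto.
  - apply rt_refl.
  - eapply rt_trans; eauto.
Qed.

Lemma conn_trans : forall t x y z, conn n tau ts pts eps t x y -> conn n tau ts pts eps t y z ->
  conn n tau ts pts eps t x z.
Proof. intros. unfold conn in *. eapply rt_trans; eauto. Qed.

Lemma conn_lt : forall t x y, conn n tau ts pts eps t x y -> (x < n)%nat -> (y < n)%nat.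
Proof.
  intros t x y H. unfold conn in H. induction H; auto. destruct H as [? [? ?]]; auto.
Qed.

Lemma comp_lt : forall t C y, IsComp n tau ts pts eps t C -> C y -> (y < n)%nat.
Proof. intros t C y [x [Hx HC]] Hy. apply HC in Hy. tauto. Qed.

Lemma comp_conn : forall t C y1 y2, IsComp n tau ts pts eps t C -> C y1 -> C y2 ->
  conn n tau ts pts eps t y1 y2.
Proof.
  intros t C y1 y2 [x [Hx HC]] H1 H2. apply HC in H1; apply HC in H2.
  eapply conn_trans; [apply conn_sym; apply H1|apply H2].
Qed.

Lemma comp_closed : forall t C y z, IsComp n tau ts pts eps t C -> C y ->
  conn n tau ts pts eps t y z -> C z.
Proof.
  intros t C y z HC0 Hy Hyz. pose proof (comp_lt _ _ _ HC0 Hy) as Hyn.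
  destruct HC0 as [x [Hx HC]]. apply HC. apply HC in Hy. split.
  - eapply conn_lt; eauto.
  - eapply conn_trans; [apply Hy|auto].
Qed.

Lemma comp_share : forall t C C' y, IsComp n tau ts pts eps t C -> IsComp n tau ts pts eps t C' ->
  C y -> C' y -> sameset C C'.
Proof.
  intros t C C' y H H' Hy Hy' z. split; intro Hz.
  - eapply comp_closed; [exact H'|exact Hy'|]. eapply comp_conn; [exact H|exact Hy|exact Hz].
  - eapply comp_closed; [exact H|exact Hy|]. eapply comp_conn; [exact H'|exact Hy'|exact Hz].
Qed.

Lemma comp_nonempty : forall t C, IsComp n tau ts pts eps t C -> exists y, C y.
Proof. intros t C [x [Hx HC]]. exists x. apply HC. split; auto. apply rt_refl. Qed.

Lemma conn_out : forall t x y, t < ts 0 \/ ts tau < t -> conn n tau ts pts eps t x y -> x = y.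
Proof.
  intros t x y Ht H. unfold conn in H. induction H; auto.
  - destruct H as [_ [_ D]]. exfalso; eapply dconn_out; eauto.
  - congruence.
Qed.

Lemma comp_out : forall t C y1 y2, t < ts 0 \/ ts tau < t -> IsComp n tau ts pts eps t C ->
  C y1 -> C y2 -> y1 = y2.
Proof. intros. eapply conn_out; eauto. eapply comp_conn; eauto. Qed.

End Basic.


Lemma count_inj : forall (N M : nat) (Rl : nat -> nat -> Prop),
  (forall v, (v < N)%nat -> exists c, (c < M)%nat /\ Rl v c) ->
  (forall v v' c, (v < N)%nat -> (v' < N)%nat -> Rl v c -> Rl v' c -> v = v') -> (N <= M)%nat.
Proof.
  intros N M Rl Hex Hinj.
  set (f := fun v => epsilon (inhabits 0%nat) (fun c => (c < M)%nat /\ Rl v c)).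
  assert (Hf : forall v, (v < N)%nat -> (f v < M)%nat /\ Rl v (f v)).
  { intros v Hv. unfold f. apply epsilon_spec. apply Hex; auto. }
  cut (length (map f (seq 0 N)) <= length (seq 0 M))%nat.
  { rewrite length_map, !length_seq; auto. }
  apply NoDup_incl_length.
  - apply NoDup_map_NoDup_ForallPairs; [|apply seq_NoDup].
    intros x y Hx Hy E. apply in_seq in Hx; apply in_seq in Hy.
    destruct (Hf x) as [_ H1]; [lia|]. destruct (Hf y) as [_ H2]; [lia|].
    rewrite E in H1. eapply Hinj; eauto; lia.
  - intros c Hc. apply in_map_iff in Hc. destruct Hc as [v [<- Hv]]. apply in_seq in Hv.
    apply in_seq. destruct (Hf v); lia.
Qed.

Lemma filter_one : forall (f : nat -> bool) l, (1 <= length (filter f l))%nat ->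
  exists e, In e l /\ f e = true.
Proof.
  intros f l H. destruct (filter f l) as [|e r] eqn:E; simpl in H; [lia|].
  assert (In e (filter f l)) by (rewrite E; left; auto).
  apply filter_In in H0. exists e; tauto.
Qed.

Lemma filter_two : forall (f : nat -> bool) l, NoDup l -> length (filter f l) = 2%nat ->
  exists e1 e2, e1 <> e2 /\ In e1 l /\ In e2 l /\ f e1 = true /\ f e2 = true.
Proof.
  intros f l ND H. destruct (filter f l) as [|e1 [|e2 r]] eqn:E; simpl in H; try lia.
  assert (ND2 : NoDup (filter f l)) by (apply NoDup_filter; auto).
  rewrite E in ND2. inversion ND2 as [|? ? Hnin Hnd]; subst.
  assert (In e1 (filter f l)) by (rewrite E; left; auto).
  assert (In e2 (filter f l)) by (rewrite E; right; left; auto).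
  apply filter_In in H0; apply filter_In in H1.
  exists e1, e2. split; [intro Heq; apply Hnin; rewrite Heq; left; auto|tauto].
Qed.

Lemma sum_ind : forall d m k, list_sum (map (fun v => if Nat.eqb d v then 1%nat else 0%nat) (seq k m)) =
  if andb (k <=? d) (d <? k + m) then 1%nat else 0%nat.
Proof.
  intros d m. induction m as [|m IH]; intros k; simpl.
  - destruct (k <=? d) eqn:E1; destruct (d <? k + 0) eqn:E2; simpl; auto.
    apply Nat.leb_le in E1; apply Nat.ltb_lt in E2; lia.
  - rewrite IH. destruct (Nat.eqb d k) eqn:E.
    + apply Nat.eqb_eq in E; subst.
      destruct (S k <=? k) eqn:E1; [apply Nat.leb_le in E1; lia|].
      rewrite Nat.leb_refl. replace (k <? k + S m) with true; auto.
      symmetry; apply Nat.ltb_lt; lia.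
    + apply Nat.eqb_neq in E.
      destruct (S k <=? d) eqn:E1; destruct (k <=? d) eqn:E2;
      destruct (d <? S k + m) eqn:E3; destruct (d <? k + S m) eqn:E4; simpl; auto;
      repeat match goal with
      | H : (_ <=? _) = true |- _ => apply Nat.leb_le in H
      | H : (_ <=? _) = false |- _ => apply Nat.leb_gt in H
      | H : (_ <? _) = true |- _ => apply Nat.ltb_lt in H
      | H : (_ <? _) = false |- _ => apply Nat.ltb_ge in H
      end; lia.
Qed.

Lemma sum_count : forall (dst : nat -> nat) nv L, (forall e, In e L -> (dst e < nv)%nat) ->
  length L = list_sum (map (fun v => length (filter (fun e => Nat.eqb (dst e) v) L)) (seq 0 nv)).
Proof.
  intros dst nv L. induction L as [|e L IH]; intros H.
  - simpl. clear. induction (seq 0 nv); simpl; auto.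
  - simpl. rewrite IH by (intros; apply H; right; auto).
    assert (E : forall l, list_sum (map (fun v => length (if Nat.eqb (dst e) v then e :: filter (fun e0 => Nat.eqb (dst e0) v) L else filter (fun e0 => Nat.eqb (dst e0) v) L)) l)
      = (list_sum (map (fun v => if Nat.eqb (dst e) v then 1%nat else 0%nat) l) +
         list_sum (map (fun v => length (filter (fun e0 => Nat.eqb (dst e0) v) L)) l))%nat).
    { induction l as [|v l IHl]; simpl; auto. rewrite IHl. destruct (Nat.eqb (dst e) v); simpl; lia. }
    rewrite E, sum_ind. assert (dst e < nv)%nat by (apply H; left; auto).
    replace (andb (0 <=? dst e) (dst e <? 0 + nv)) with true; [lia|].
    symmetry. apply andb_true_intro; split; [apply Nat.leb_le|apply Nat.ltb_lt]; lia.
Qed.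

Lemma sum_le2 : forall (g : nat -> nat) l, (forall v, In v l -> (g v <= 2)%nat) ->
  (list_sum (map g l) <= 2 * length l)%nat.
Proof.
  intros g l. induction l as [|v l IH]; intros H; simpl; auto.
  assert (g v <= 2)%nat by (apply H; left; auto). specialize (IH (fun w Hw => H w (or_intror Hw))). lia.
Qed.

Lemma mul_add_inj : forall x x' k i i', (i < k)%nat -> (i' < k)%nat -> (x * k + i = x' * k + i')%nat ->
  x = x' /\ i = i'.
Proof.
  intros x x' k i i' Hi Hi' E.
  destruct (lt_eq_lt_dec x x') as [[H|H]|H].
  - exfalso. assert (x * k + k <= x' * k)%nat by nia. lia.
  - subst. lia.
  - exfalso. assert (x' * k + k <= x * k)%nat by nia. lia.
Qed.

Section Reeb.
Variables (n tau : nat) (ts : nat -> R) (pts : nat -> nat -> R * R) (eps : R) (G : ReebGraph).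
Hypothesis Hinc : times_increasing tau ts.
Hypothesis Htau : (1 <= tau)%nat.
Hypothesis GP : general_position n tau ts pts eps.
Hypothesis HR : IsReebGraph n tau ts pts eps G.

Local Notation vt v := (vtime G v).
Local Notation IC := (IsComp n tau ts pts eps).
Local Notation DC := (dconn tau ts pts eps).
Local Notation CN := (conn n tau ts pts eps).

Lemma edge_ok : forall e, (e < ne G)%nat ->
  (src G e < nv G)%nat /\ (dst G e < nv G)%nat /\ vt (src G e) < vt (dst G e) /\
  forall t, vt (src G e) < t < vt (dst G e) -> IC t (ecomp G e).
Proof. destruct HR as [H _]. apply H. Qed.

Lemma edge_uniq : forall e e' t, (e < ne G)%nat -> (e' < ne G)%nat ->
  vt (src G e) < t < vt (dst G e) -> vt (src G e') < t < vt (dst G e') ->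
  sameset (ecomp G e) (ecomp G e') -> e = e'.
Proof.
  destruct HR as [_ [_ [_ H]]]. intros e e' t He He' T1 T2 S.
  apply NNPP. intro Hne. exact (H e e' t He He' Hne T1 T2 S).
Qed.

Lemma edge_nonempty : forall e, (e < ne G)%nat -> exists y, ecomp G e y.
Proof.
  intros e He. destruct (edge_ok e He) as [_ [_ [Ht Hc]]].
  apply (comp_nonempty n tau ts pts eps ((vt (src G e) + vt (dst G e)) / 2)). apply Hc; lra.
Qed.

Lemma merge_struct : forall v, (v < nv G)%nat -> vkind G v = VMerge ->
  exists e1 e2 e3, e1 <> e2 /\ (e1 < ne G)%nat /\ (e2 < ne G)%nat /\ (e3 < ne G)%nat /\
    dst G e1 = v /\ dst G e2 = v /\ src G e3 = v /\
    (forall y, ~ (ecomp G e1 y /\ ecomp G e2 y)) /\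
    sameset (ecomp G e3) (fun y => ecomp G e1 y \/ ecomp G e2 y).
Proof.
  intros v Hv Hk. destruct HR as [_ [H _]]. specialize (H v Hv). rewrite Hk in H.
  destruct H as [Hin [Hout Hm]]. unfold indeg, outdeg in *.
  destruct (filter_two _ _ (seq_NoDup _ _) Hin) as [e1 [e2 [Hne [I1 [I2 [F1 F2]]]]]].
  destruct (filter_one (fun e => Nat.eqb (src G e) v) (seq 0 (ne G))) as [e3 [I3 F3]]; [lia|].
  apply in_seq in I1, I2, I3. apply Nat.eqb_eq in F1, F2, F3.
  destruct (Hm e1 e2 e3) as [D S]; try lia; auto.
  exists e1, e2, e3. refine (conj Hne (conj _ (conj _ (conj _ (conj F1 (conj F2 (conj F3 (conj D S)))))))); lia.
Qed.

Lemma split_struct : forall v, (v < nv G)%nat -> vkind G v = VSplit ->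
  exists e1 e2 e3, e1 <> e2 /\ (e1 < ne G)%nat /\ (e2 < ne G)%nat /\ (e3 < ne G)%nat /\
    src G e1 = v /\ src G e2 = v /\ dst G e3 = v /\
    (forall y, ~ (ecomp G e1 y /\ ecomp G e2 y)) /\
    sameset (ecomp G e3) (fun y => ecomp G e1 y \/ ecomp G e2 y).
Proof.
  intros v Hv Hk. destruct HR as [_ [H _]]. specialize (H v Hv). rewrite Hk in H.
  destruct H as [Hin [Hout Hm]]. unfold indeg, outdeg in *.
  destruct (filter_two _ _ (seq_NoDup _ _) Hout) as [e1 [e2 [Hne [I1 [I2 [F1 F2]]]]]].
  destruct (filter_one (fun e => Nat.eqb (dst G e) v) (seq 0 (ne G))) as [e3 [I3 F3]]; [lia|].
  apply in_seq in I1, I2, I3. apply Nat.eqb_eq in F1, F2, F3.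
  destruct (Hm e1 e2 e3) as [D S]; try lia; auto.
  exists e1, e2, e3. refine (conj Hne (conj _ (conj _ (conj _ (conj F1 (conj F2 (conj F3 (conj D S)))))))); lia.
Qed.

Lemma VT : forall v, (v < nv G)%nat -> ts 0 <= vt v <= ts tau.
Proof.
  intros v Hv. assert (H0T : ts 0 <= ts tau) by (apply (ts_le tau ts Hinc); lia).
  destruct HR as [_ [H _]]. pose proof (H v Hv) as Hk.
  destruct (vkind G v) eqn:K.
  - destruct Hk as [_ [_ [-> _]]]. lra.
  - destruct Hk as [_ [_ [-> _]]]. lra.
  - destruct (merge_struct v Hv K) as [e1 [e2 [e3 [Hne [H1 [H2 [H3 [D1 [D2 [S3 [Dis Sm]]]]]]]]]]].
    destruct (edge_nonempty e1 H1) as [y1 Y1]. destruct (edge_nonempty e2 H2) as [y2 Y2].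
    destruct (edge_ok e3 H3) as [_ [_ [T3 C3]]]. rewrite S3 in T3, C3.
    apply NNPP. intro Out.
    assert (exists s, vt v < s < vt (dst G e3) /\ (s < ts 0 \/ ts tau < s)) as [s [Hs Hso]].
    { destruct (Rlt_le_dec (vt v) (ts 0)).
      - exists ((vt v + Rmin (vt (dst G e3)) (ts 0)) / 2).
        assert (Rmin (vt (dst G e3)) (ts 0) <= vt (dst G e3)) by apply Rmin_l.
        assert (Rmin (vt (dst G e3)) (ts 0) <= ts 0) by apply Rmin_r.
        assert (vt v < Rmin (vt (dst G e3)) (ts 0)) by (apply Rmin_glb_lt; lra).
        split; [lra|left; lra].
      - exists ((vt v + vt (dst G e3)) / 2). split; [lra|right; lra]. }
    assert (y1 = y2).
    { eapply (comp_out n tau ts pts eps Hinc s (ecomp G e3)); eauto; apply Sm; auto. }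
    subst. apply (Dis y2); auto.
  - destruct (split_struct v Hv K) as [e1 [e2 [e3 [Hne [H1 [H2 [H3 [D1 [D2 [S3 [Dis Sm]]]]]]]]]]].
    destruct (edge_nonempty e1 H1) as [y1 Y1]. destruct (edge_nonempty e2 H2) as [y2 Y2].
    destruct (edge_ok e3 H3) as [_ [_ [T3 C3]]]. rewrite S3 in T3, C3.
    apply NNPP. intro Out.
    assert (exists s, vt (src G e3) < s < vt v /\ (s < ts 0 \/ ts tau < s)) as [s [Hs Hso]].
    { destruct (Rlt_le_dec (vt v) (ts 0)).
      - exists ((vt v + vt (src G e3)) / 2). split; [lra|left; lra].
      - exists ((vt v + Rmax (vt (src G e3)) (ts tau)) / 2).
        assert (vt (src G e3) <= Rmax (vt (src G e3)) (ts tau)) by apply Rmax_l.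
        assert (ts tau <= Rmax (vt (src G e3)) (ts tau)) by apply Rmax_r.
        assert (Rmax (vt (src G e3)) (ts tau) < vt v) by (apply Rmax_lub_lt; lra).
        split; [lra|right; lra]. }
    assert (y1 = y2).
    { eapply (comp_out n tau ts pts eps Hinc s (ecomp G e3)); eauto; apply Sm; auto. }
    subst. apply (Dis y2); auto.
Qed.

Lemma bc_sym : forall a b t, becomes_connected tau ts pts eps a b t -> becomes_connected tau ts pts eps b a t.
Proof.
  intros a b t [H1 [H2 H3]]. split; auto. split; [apply dconn_sym; auto|].
  intros d Hd. destruct (H3 d Hd) as [s [? [? N]]]. exists s; split; auto; split; auto.
  intro D; apply N; apply dconn_sym; auto.
Qed.

Lemma bd_sym : forall a b t, becomes_disconnected tau ts pts eps a b t -> becomes_disconnected tau ts pts eps b a t.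
Proof.
  intros a b t [H1 [H2 H3]]. split; auto. split; [apply dconn_sym; auto|].
  intros d Hd. destruct (H3 d Hd) as [s [? [? N]]]. exists s; split; auto; split; auto.
  intro D; apply N; apply dconn_sym; auto.
Qed.

Lemma MA : forall v, (v < nv G)%nat -> vkind G v = VMerge ->
  exists e3 a b, (e3 < ne G)%nat /\ src G e3 = v /\ (a < b)%nat /\
    event n tau ts pts eps a b true (vt v) /\ ecomp G e3 a /\ ecomp G e3 b.
Proof.
  intros v Hv K.
  destruct (merge_struct v Hv K) as [e1 [e2 [e3 [Hne [H1 [H2 [H3 [D1 [D2 [S3 [Dis Sm]]]]]]]]]]].
  set (t := vt v).
  destruct (edge_ok e1 H1) as [Hs1 [_ [T1 C1]]]. rewrite D1 in T1, C1.
  destruct (edge_ok e2 H2) as [Hs2 [_ [T2 C2]]]. rewrite D2 in T2, C2.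
  destruct (edge_ok e3 H3) as [_ [Hd3 [T3 C3]]]. rewrite S3 in T3, C3.
  pose proof (VT (src G e1) Hs1) as V1. pose proof (VT (src G e2) Hs2) as V2.
  pose proof (VT (dst G e3) Hd3) as V3.
  fold t in T1, T2, T3, C1, C2, C3.
  assert (Ht1 : ts 0 < t) by lra. assert (Ht2 : t < ts tau) by lra.
  destruct (uniform_right n tau ts pts eps Hinc t (conj (Rlt_le _ _ Ht1) Ht2)) as [dR [HdR UR]].
  destruct (uniform_left n tau ts pts eps Hinc t (conj Ht1 (Rlt_le _ _ Ht2))) as [dL [HdL UL]].
  destruct (edge_nonempty e1 H1) as [y1 Y1]. destruct (edge_nonempty e2 H2) as [y2 Y2].
  set (mR := Rmin dR (vt (dst G e3) - t)).
  assert (0 < mR) by (apply Rmin_pos; lra).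
  assert (mR <= dR) by apply Rmin_l. assert (mR <= vt (dst G e3) - t) by apply Rmin_r.
  set (sR := t + mR / 2).
  assert (CR : IC sR (ecomp G e3)) by (apply C3; unfold sR; lra).
  assert (HcR : forall a b, (a < n)%nat -> (b < n)%nat ->
            (DC sR a b <-> Plus tau ts pts eps t a b)) by (intros; apply UR; auto; unfold sR; lra).
  assert (Hc : clos_refl_trans nat (fun a b => (a < n)%nat /\ (b < n)%nat /\ Plus tau ts pts eps t a b) y1 y2).
  { apply (conn_const n tau ts pts eps sR _ HcR).
    apply (comp_conn n tau ts pts eps sR (ecomp G e3)); auto; apply Sm; auto. }
  set (mL := Rmin dL (Rmin (t - vt (src G e1)) (t - vt (src G e2)))).
  assert (0 < mL) by (unfold mL; repeat apply Rmin_pos; lra).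
  assert (mL <= dL) by apply Rmin_l.
  assert (mL <= t - vt (src G e1)) by (eapply Rle_trans; [apply Rmin_r|apply Rmin_l]).
  assert (mL <= t - vt (src G e2)) by (eapply Rle_trans; [apply Rmin_r|apply Rmin_r]).
  set (sL := t - mL / 2).
  assert (CL1 : IC sL (ecomp G e1)) by (apply C1; unfold sL; lra).
  assert (HcL : forall a b, (a < n)%nat -> (b < n)%nat ->
            (DC sL a b <-> Minus tau ts pts eps t a b)) by (intros; apply UL; auto; unfold sL; lra).
  assert (Hn : ~ clos_refl_trans nat (fun a b => (a < n)%nat /\ (b < n)%nat /\ Minus tau ts pts eps t a b) y1 y2).
  { intro Hm. apply (conn_const n tau ts pts eps sL _ HcL) in Hm.
    apply (Dis y2); split; auto.
    apply (comp_closed n tau ts pts eps sL (ecomp G e1) y1); auto. }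
  destruct (rt_diff _ _ _ _ Hc Hn) as [p [q [[Hp [Hq HPl]] [HnM Hy1p]]]].
  assert (HnotM : ~ Minus tau ts pts eps t p q) by (intro HM; apply HnM; split; [exact Hp|split; [exact Hq|exact HM]]).
  assert (Aft : forall s, t < s < t + dR -> DC s p q) by (intros s Hs; apply (UR p q Hp Hq s Hs); auto).
  assert (HDt : DC t p q) by (apply (closure_right tau ts pts eps Hinc t p q dR); auto; lra).
  assert (hB : forall d, 0 < d -> exists s, in_domain tau ts s /\ t - d < s < t /\ ~ DC s p q).
  { intros d Hd. set (m := Rmin d (Rmin dL (t - ts 0))).
    assert (0 < m) by (unfold m; repeat apply Rmin_pos; lra).
    assert (m <= d) by apply Rmin_l.
    assert (m <= dL) by (eapply Rle_trans; [apply Rmin_r|apply Rmin_l]).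
    assert (m <= t - ts 0) by (eapply Rle_trans; [apply Rmin_r|apply Rmin_r]).
    exists (t - m / 2). split; [unfold in_domain; lra|]. split; [lra|].
    intro D. apply HnotM. apply (proj1 (UL p q Hp Hq (t - m / 2) ltac:(lra))); auto. }
  assert (Hpq : p <> q).
  { intro E; subst q. destruct (hB 1 ltac:(lra)) as [s [Hds [_ N]]]. apply N.
    apply (dconn_refl tau ts pts eps Hinc); auto. }
  assert (E3p : ecomp G e3 p).
  { apply (comp_closed n tau ts pts eps sR (ecomp G e3) y1); auto; [apply Sm; auto|].
    apply (conn_const n tau ts pts eps sR _ HcR); auto. }
  assert (E3q : ecomp G e3 q).
  { apply (comp_closed n tau ts pts eps sR (ecomp G e3) p); auto.
    apply rt_step. split; auto. split; auto. apply HcR; auto. }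
  assert (BC : becomes_connected tau ts pts eps p q t).
  { split; [unfold in_domain; lra|]. split; auto. }
  destruct (lt_dec p q) as [Hlt|Hge].
  - exists e3, p, q. refine (conj H3 (conj S3 (conj Hlt (conj (conj Hlt (conj Hq BC)) (conj E3p E3q))))). 
  - assert (Hlt : (q < p)%nat) by lia. exists e3, q, p. refine (conj H3 (conj S3 (conj Hlt (conj (conj Hlt (conj Hp (bc_sym _ _ _ BC))) (conj E3q E3p))))).
Qed.

Lemma SA : forall v, (v < nv G)%nat -> vkind G v = VSplit ->
  exists e3 a b, (e3 < ne G)%nat /\ dst G e3 = v /\ (a < b)%nat /\
    event n tau ts pts eps a b false (vt v) /\ ecomp G e3 a /\ ecomp G e3 b.
Proof.
  intros v Hv K.
  destruct (split_struct v Hv K) as [e1 [e2 [e3 [Hne [H1 [H2 [H3 [D1 [D2 [S3 [Dis Sm]]]]]]]]]]].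
  set (t := vt v).
  destruct (edge_ok e1 H1) as [_ [Hs1 [T1 C1]]]. rewrite D1 in T1, C1.
  destruct (edge_ok e2 H2) as [_ [Hs2 [T2 C2]]]. rewrite D2 in T2, C2.
  destruct (edge_ok e3 H3) as [Hd3 [_ [T3 C3]]]. rewrite S3 in T3, C3.
  pose proof (VT (dst G e1) Hs1) as V1. pose proof (VT (dst G e2) Hs2) as V2.
  pose proof (VT (src G e3) Hd3) as V3.
  fold t in T1, T2, T3, C1, C2, C3.
  assert (Ht1 : ts 0 < t) by lra. assert (Ht2 : t < ts tau) by lra.
  destruct (uniform_right n tau ts pts eps Hinc t (conj (Rlt_le _ _ Ht1) Ht2)) as [dR [HdR UR]].
  destruct (uniform_left n tau ts pts eps Hinc t (conj Ht1 (Rlt_le _ _ Ht2))) as [dL [HdL UL]].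
  destruct (edge_nonempty e1 H1) as [y1 Y1]. destruct (edge_nonempty e2 H2) as [y2 Y2].
  set (mL := Rmin dL (t - vt (src G e3))).
  assert (0 < mL) by (apply Rmin_pos; lra).
  assert (mL <= dL) by apply Rmin_l. assert (mL <= t - vt (src G e3)) by apply Rmin_r.
  set (sL := t - mL / 2).
  assert (CL : IC sL (ecomp G e3)) by (apply C3; unfold sL; lra).
  assert (HcL : forall a b, (a < n)%nat -> (b < n)%nat ->
            (DC sL a b <-> Minus tau ts pts eps t a b)) by (intros; apply UL; auto; unfold sL; lra).
  assert (Hc : clos_refl_trans nat (fun a b => (a < n)%nat /\ (b < n)%nat /\ Minus tau ts pts eps t a b) y1 y2).
  { apply (conn_const n tau ts pts eps sL _ HcL).
    apply (comp_conn n tau ts pts eps sL (ecomp G e3)); auto; apply Sm; auto. }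
  set (mR := Rmin dR (Rmin (vt (dst G e1) - t) (vt (dst G e2) - t))).
  assert (0 < mR) by (unfold mR; repeat apply Rmin_pos; lra).
  assert (mR <= dR) by apply Rmin_l.
  assert (mR <= vt (dst G e1) - t) by (eapply Rle_trans; [apply Rmin_r|apply Rmin_l]).
  assert (mR <= vt (dst G e2) - t) by (eapply Rle_trans; [apply Rmin_r|apply Rmin_r]).
  set (sR := t + mR / 2).
  assert (CR1 : IC sR (ecomp G e1)) by (apply C1; unfold sR; lra).
  assert (HcR : forall a b, (a < n)%nat -> (b < n)%nat ->
            (DC sR a b <-> Plus tau ts pts eps t a b)) by (intros; apply UR; auto; unfold sR; lra).
  assert (Hn : ~ clos_refl_trans nat (fun a b => (a < n)%nat /\ (b < n)%nat /\ Plus tau ts pts eps t a b) y1 y2).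
  { intro Hm. apply (conn_const n tau ts pts eps sR _ HcR) in Hm.
    apply (Dis y2); split; auto.
    apply (comp_closed n tau ts pts eps sR (ecomp G e1) y1); auto. }
  destruct (rt_diff _ _ _ _ Hc Hn) as [p [q [[Hp [Hq HMi]] [HnP Hy1p]]]].
  assert (HnotP : ~ Plus tau ts pts eps t p q) by (intro HP; apply HnP; split; [exact Hp|split; [exact Hq|exact HP]]).
  assert (Bef : forall s, t - dL < s < t -> DC s p q) by (intros s Hs; apply (UL p q Hp Hq s Hs); auto).
  assert (HDt : DC t p q) by (apply (closure_left tau ts pts eps Hinc t p q dL); auto; lra).
  assert (hA : forall d, 0 < d -> exists s, in_domain tau ts s /\ t < s < t + d /\ ~ DC s p q).
  { intros d Hd. set (m := Rmin d (Rmin dR (ts tau - t))).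
    assert (0 < m) by (unfold m; repeat apply Rmin_pos; lra).
    assert (m <= d) by apply Rmin_l.
    assert (m <= dR) by (eapply Rle_trans; [apply Rmin_r|apply Rmin_l]).
    assert (m <= ts tau - t) by (eapply Rle_trans; [apply Rmin_r|apply Rmin_r]).
    exists (t + m / 2). split; [unfold in_domain; lra|]. split; [lra|].
    intro D. apply HnotP. apply (proj1 (UR p q Hp Hq (t + m / 2) ltac:(lra))); auto. }
  assert (Hpq : p <> q).
  { intro E; subst q. destruct (hA 1 ltac:(lra)) as [s [Hds [_ N]]]. apply N.
    apply (dconn_refl tau ts pts eps Hinc); auto. }
  assert (E3p : ecomp G e3 p).
  { apply (comp_closed n tau ts pts eps sL (ecomp G e3) y1); auto; [apply Sm; auto|].
    apply (conn_const n tau ts pts eps sL _ HcL); auto. }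
  assert (E3q : ecomp G e3 q).
  { apply (comp_closed n tau ts pts eps sL (ecomp G e3) p); auto.
    apply rt_step. split; auto. split; auto. apply HcL; auto. }
  assert (BD : becomes_disconnected tau ts pts eps p q t).
  { split; [unfold in_domain; lra|]. split; auto. }
  destruct (lt_dec p q) as [Hlt|Hge].
  - exists e3, p, q. refine (conj H3 (conj S3 (conj Hlt (conj (conj Hlt (conj Hq BD)) (conj E3p E3q))))).
  - assert (Hlt : (q < p)%nat) by lia. exists e3, q, p. refine (conj H3 (conj S3 (conj Hlt (conj (conj Hlt (conj Hp (bd_sym _ _ _ BD))) (conj E3q E3p))))).
Qed.

Lemma EUc_lt : forall a b t t' i, becomes_connected tau ts pts eps a b t ->
  becomes_connected tau ts pts eps a b t' -> (i < tau)%nat ->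
  ts i <= t < ts (S i) -> ts i <= t' < ts (S i) -> t < t' -> False.
Proof.
  intros a b t t' i [_ [Dt _]] [_ [Dt' Hb]] Hi Si Si' Hlt.
  destruct (Hb (t' - t) ltac:(lra)) as [s [_ [Hs N]]]. apply N.
  rewrite (dconn_seg tau ts pts eps Hinc i) in Dt, Dt' |- *; auto; try (unfold seg; lra).
  eapply F_convex; [|exact Dt|exact Dt']. lra.
Qed.

Lemma EU_conn : forall a b t t' i, becomes_connected tau ts pts eps a b t ->
  becomes_connected tau ts pts eps a b t' -> (i < tau)%nat ->
  ts i <= t < ts (S i) -> ts i <= t' < ts (S i) -> t = t'.
Proof.
  intros. destruct (Rtotal_order t t') as [Ho|[Ho|Ho]]; auto; exfalso.
  - eapply EUc_lt with (t := t) (t' := t'); eauto.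
  - eapply EUc_lt with (t := t') (t' := t); eauto.
Qed.

Lemma EUd_lt : forall a b t t' i, becomes_disconnected tau ts pts eps a b t ->
  becomes_disconnected tau ts pts eps a b t' -> (i < tau)%nat ->
  ts i < t <= ts (S i) -> ts i < t' <= ts (S i) -> t < t' -> False.
Proof.
  intros a b t t' i [_ [Dt Hb]] [_ [Dt' _]] Hi Si Si' Hlt.
  destruct (Hb (t' - t) ltac:(lra)) as [s [_ [Hs N]]]. apply N.
  rewrite (dconn_seg tau ts pts eps Hinc i) in Dt, Dt' |- *; auto; try (unfold seg; lra).
  eapply F_convex; [|exact Dt|exact Dt']. lra.
Qed.

Lemma EU_disc : forall a b t t' i, becomes_disconnected tau ts pts eps a b t ->
  becomes_disconnected tau ts pts eps a b t' -> (i < tau)%nat ->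
  ts i < t <= ts (S i) -> ts i < t' <= ts (S i) -> t = t'.
Proof.
  intros. destruct (Rtotal_order t t') as [Ho|[Ho|Ho]]; auto; exfalso.
  - eapply EUd_lt with (t := t) (t' := t'); eauto.
  - eapply EUd_lt with (t := t') (t' := t); eauto.
Qed.

Lemma GP_same : forall a b a' b' k t, event n tau ts pts eps a b k t ->
  event n tau ts pts eps a' b' k t -> a = a' /\ b = b'.
Proof.
  intros a b a' b' k t E E'. destruct GP as [G1 _].
  destruct (classic ((a, b, k) = (a', b', k))) as [Heq|Hne].
  - inversion Heq; auto.
  - exfalso. exact (G1 _ _ _ _ _ _ _ _ E E' Hne eq_refl).
Qed.

Lemma MU : forall v v', (v < nv G)%nat -> (v' < nv G)%nat -> vkind G v = VMerge -> vkind G v' = VMerge ->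
  vt v = vt v' -> v = v'.
Proof.
  intros v v' Hv Hv' K K' Et.
  destruct (MA v Hv K) as [e [a [b [He [Se [_ [Ev [Ea _]]]]]]]].
  destruct (MA v' Hv' K') as [e' [a' [b' [He' [Se' [_ [Ev' [Ea' _]]]]]]]].
  rewrite <- Et in Ev'. destruct (GP_same _ _ _ _ _ _ Ev Ev') as [<- <-].
  destruct (edge_ok e He) as [_ [_ [T C]]]. destruct (edge_ok e' He') as [_ [_ [T' C']]].
  rewrite Se in T, C. rewrite Se' in T', C'. rewrite <- Et in T', C'.
  set (m := Rmin (vt (dst G e) - vt v) (vt (dst G e') - vt v)).
  assert (0 < m) by (apply Rmin_pos; lra).
  assert (m <= vt (dst G e) - vt v) by apply Rmin_l. assert (m <= vt (dst G e') - vt v) by apply Rmin_r.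
  assert (E : e = e').
  { apply (edge_uniq e e' (vt v + m / 2)); auto; try (rewrite Se); try (rewrite Se'); try lra.
    apply (comp_share n tau ts pts eps (vt v + m / 2) _ _ a); auto; [apply C|apply C']; lra. }
  subst e'. congruence.
Qed.

Lemma SU : forall v v', (v < nv G)%nat -> (v' < nv G)%nat -> vkind G v = VSplit -> vkind G v' = VSplit ->
  vt v = vt v' -> v = v'.
Proof.
  intros v v' Hv Hv' K K' Et.
  destruct (SA v Hv K) as [e [a [b [He [Se [_ [Ev [Ea _]]]]]]]].
  destruct (SA v' Hv' K') as [e' [a' [b' [He' [Se' [_ [Ev' [Ea' _]]]]]]]].
  rewrite <- Et in Ev'. destruct (GP_same _ _ _ _ _ _ Ev Ev') as [<- <-].
  destruct (edge_ok e He) as [_ [_ [T C]]]. destruct (edge_ok e' He') as [_ [_ [T' C']]].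
  rewrite Se in T, C. rewrite Se' in T', C'. rewrite <- Et in T', C'.
  set (m := Rmin (vt v - vt (src G e)) (vt v - vt (src G e'))).
  assert (0 < m) by (apply Rmin_pos; lra).
  assert (m <= vt v - vt (src G e)) by apply Rmin_l. assert (m <= vt v - vt (src G e')) by apply Rmin_r.
  assert (E : e = e').
  { apply (edge_uniq e e' (vt v - m / 2)); auto; try (rewrite Se); try (rewrite Se'); try lra.
    apply (comp_share n tau ts pts eps (vt v - m / 2) _ _ a); auto; [apply C|apply C']; lra. }
  subst e'. congruence.
Qed.

Lemma start_edge : forall v, (v < nv G)%nat -> vkind G v = VStart ->
  vt v = ts 0 /\ exists e x, (e < ne G)%nat /\ src G e = v /\ ecomp G e x /\ (x < n)%nat.
Proof.
  intros v Hv K. destruct HR as [_ [H _]]. specialize (H v Hv). rewrite K in H.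
  destruct H as [_ [Hout [Ht _]]]. split; auto. unfold outdeg in Hout.
  destruct (filter_one (fun e => Nat.eqb (src G e) v) (seq 0 (ne G))) as [e [I F1]]; [lia|].
  apply in_seq in I. apply Nat.eqb_eq in F1.
  destruct (edge_ok e ltac:(lia)) as [_ [_ [T C]]].
  assert (IC ((vt (src G e) + vt (dst G e)) / 2) (ecomp G e)) as Ci by (apply C; lra).
  destruct (comp_nonempty _ _ _ _ _ _ _ Ci) as [x Hx].
  exists e, x. repeat split; auto; try lia. eapply comp_lt; eauto.
Qed.

Lemma end_edge : forall v, (v < nv G)%nat -> vkind G v = VEnd ->
  vt v = ts tau /\ exists e x, (e < ne G)%nat /\ dst G e = v /\ ecomp G e x /\ (x < n)%nat.
Proof.
  intros v Hv K. destruct HR as [_ [H _]]. specialize (H v Hv). rewrite K in H.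
  destruct H as [Hin [_ [Ht _]]]. split; auto. unfold indeg in Hin.
  destruct (filter_one (fun e => Nat.eqb (dst G e) v) (seq 0 (ne G))) as [e [I F1]]; [lia|].
  apply in_seq in I. apply Nat.eqb_eq in F1.
  destruct (edge_ok e ltac:(lia)) as [_ [_ [T C]]].
  assert (IC ((vt (src G e) + vt (dst G e)) / 2) (ecomp G e)) as Ci by (apply C; lra).
  destruct (comp_nonempty _ _ _ _ _ _ _ Ci) as [x Hx].
  exists e, x. repeat split; auto; try lia. eapply comp_lt; eauto.
Qed.

Lemma start_inj : forall v v' e e' x, (v < nv G)%nat -> (v' < nv G)%nat ->
  vkind G v = VStart -> vkind G v' = VStart -> (e < ne G)%nat -> (e' < ne G)%nat ->
  src G e = v -> src G e' = v' -> ecomp G e x -> ecomp G e' x -> v = v'.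
Proof.
  intros v v' e e' x Hv Hv' K K' He He' Se Se' X X'.
  destruct (start_edge v Hv K) as [Tv _]. destruct (start_edge v' Hv' K') as [Tv' _].
  destruct (edge_ok e He) as [_ [_ [T C]]]. destruct (edge_ok e' He') as [_ [_ [T' C']]].
  rewrite Se, Tv in T, C. rewrite Se', Tv' in T', C'.
  set (m := Rmin (vt (dst G e) - ts 0) (vt (dst G e') - ts 0)).
  assert (0 < m) by (apply Rmin_pos; lra).
  assert (m <= vt (dst G e) - ts 0) by apply Rmin_l. assert (m <= vt (dst G e') - ts 0) by apply Rmin_r.
  assert (E : e = e').
  { apply (edge_uniq e e' (ts 0 + m / 2)); auto; try (rewrite Se, Tv); try (rewrite Se', Tv'); try lra.
    apply (comp_share n tau ts pts eps (ts 0 + m / 2) _ _ x); auto; [apply C|apply C']; lra. }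
  subst e'. congruence.
Qed.

Lemma end_inj : forall v v' e e' x, (v < nv G)%nat -> (v' < nv G)%nat ->
  vkind G v = VEnd -> vkind G v' = VEnd -> (e < ne G)%nat -> (e' < ne G)%nat ->
  dst G e = v -> dst G e' = v' -> ecomp G e x -> ecomp G e' x -> v = v'.
Proof.
  intros v v' e e' x Hv Hv' K K' He He' Se Se' X X'.
  destruct (end_edge v Hv K) as [Tv _]. destruct (end_edge v' Hv' K') as [Tv' _].
  destruct (edge_ok e He) as [_ [_ [T C]]]. destruct (edge_ok e' He') as [_ [_ [T' C']]].
  rewrite Se, Tv in T, C. rewrite Se', Tv' in T', C'.
  set (m := Rmin (ts tau - vt (src G e)) (ts tau - vt (src G e'))).
  assert (0 < m) by (apply Rmin_pos; lra).
  assert (m <= ts tau - vt (src G e)) by apply Rmin_l. assert (m <= ts tau - vt (src G e')) by apply Rmin_r.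
  assert (E : e = e').
  { apply (edge_uniq e e' (ts tau - m / 2)); auto; try (rewrite Se, Tv); try (rewrite Se', Tv'); try lra.
    apply (comp_share n tau ts pts eps (ts tau - m / 2) _ _ x); auto; [apply C|apply C']; lra. }
  subst e'. congruence.
Qed.

Definition vcode (v c : nat) : Prop :=
  match vkind G v with
  | VStart => exists e x, (e < ne G)%nat /\ src G e = v /\ ecomp G e x /\ (x < n)%nat /\ c = x
  | VEnd => exists e x, (e < ne G)%nat /\ dst G e = v /\ ecomp G e x /\ (x < n)%nat /\ c = (n + x)%nat
  | VMerge => exists a b i, (a < b)%nat /\ (b < n)%nat /\ (i < tau)%nat /\
      event n tau ts pts eps a b true (vt v) /\ ts i <= vt v < ts (S i) /\
      c = (2 * n + ((a * n + b) * tau + i))%nat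
  | VSplit => exists a b i, (a < b)%nat /\ (b < n)%nat /\ (i < tau)%nat /\
      event n tau ts pts eps a b false (vt v) /\ ts i < vt v <= ts (S i) /\
      c = (2 * n + n * n * tau + ((a * n + b) * tau + i))%nat
  end.

Lemma code_bound : forall a b i, (a < n)%nat -> (b < n)%nat -> (i < tau)%nat ->
  ((a * n + b) * tau + i < n * n * tau)%nat.
Proof.
  intros. assert (a * n + b < n * n)%nat by nia. nia.
Qed.

Lemma merge_code_inj : forall v v' a b i a' b' i', (v < nv G)%nat -> (v' < nv G)%nat ->
  vkind G v = VMerge -> vkind G v' = VMerge ->
  (b < n)%nat -> (i < tau)%nat -> (b' < n)%nat -> (i' < tau)%nat ->
  event n tau ts pts eps a b true (vt v) -> ts i <= vt v < ts (S i) ->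
  event n tau ts pts eps a' b' true (vt v') -> ts i' <= vt v' < ts (S i') ->
  ((a * n + b) * tau + i = (a' * n + b') * tau + i')%nat -> v = v'.
Proof.
  intros v v' a b i a' b' i' Hv Hv' K K' Hb Hi Hb' Hi' Ev Si Ev' Si' E.
  destruct (mul_add_inj _ _ _ _ _ Hi Hi' E) as [E1 <-].
  destruct (mul_add_inj _ _ _ _ _ Hb Hb' E1) as [<- <-].
  apply MU; auto. destruct Ev as [_ [_ B]]. destruct Ev' as [_ [_ B']].
  eapply EU_conn; eauto.
Qed.

Lemma split_code_inj : forall v v' a b i a' b' i', (v < nv G)%nat -> (v' < nv G)%nat ->
  vkind G v = VSplit -> vkind G v' = VSplit ->
  (b < n)%nat -> (i < tau)%nat -> (b' < n)%nat -> (i' < tau)%nat ->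
  event n tau ts pts eps a b false (vt v) -> ts i < vt v <= ts (S i) ->
  event n tau ts pts eps a' b' false (vt v') -> ts i' < vt v' <= ts (S i') ->
  ((a * n + b) * tau + i = (a' * n + b') * tau + i')%nat -> v = v'.
Proof.
  intros v v' a b i a' b' i' Hv Hv' K K' Hb Hi Hb' Hi' Ev Si Ev' Si' E.
  destruct (mul_add_inj _ _ _ _ _ Hi Hi' E) as [E1 <-].
  destruct (mul_add_inj _ _ _ _ _ Hb Hb' E1) as [<- <-].
  apply SU; auto. destruct Ev as [_ [_ B]]. destruct Ev' as [_ [_ B']].
  eapply EU_disc; eauto.
Qed.

Lemma nv_bound : (nv G <= 2 * n + 2 * (n * n * tau))%nat.
Proof.
  apply (count_inj (nv G) _ vcode).
  - intros v Hv. unfold vcode. destruct (vkind G v) eqn:K.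
    + destruct (start_edge v Hv K) as [_ [e [x [He [Se [X Hx]]]]]].
      exists x. split; [lia|]. exists e, x; auto.
    + destruct (end_edge v Hv K) as [_ [e [x [He [Se [X Hx]]]]]].
      exists (n + x)%nat. split; [lia|]. exists e, x; auto.
    + destruct (MA v Hv K) as [_ [a [b [_ [_ [Hab [Ev _]]]]]]].
      destruct GP as [_ G2]. pose proof (G2 _ _ _ _ Ev) as Ht.
      destruct (find_seg_r tau ts (vt v)) as [i [Hi Si]]; [lra|].
      pose proof Ev as Ev0. destruct Ev as [_ [Hb _]].
      exists (2 * n + ((a * n + b) * tau + i))%nat. split.
      * pose proof (code_bound a b i ltac:(lia) Hb Hi). lia.
      * exists a, b, i. refine (conj Hab (conj Hb (conj Hi (conj Ev0 (conj Si eq_refl))))).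
    + destruct (SA v Hv K) as [_ [a [b [_ [_ [Hab [Ev _]]]]]]].
      destruct GP as [_ G2]. pose proof (G2 _ _ _ _ Ev) as Ht.
      destruct (find_seg_l tau ts (vt v)) as [i [Hi Si]]; [lra|].
      pose proof Ev as Ev0. destruct Ev as [_ [Hb _]].
      exists (2 * n + n * n * tau + ((a * n + b) * tau + i))%nat. split.
      * pose proof (code_bound a b i ltac:(lia) Hb Hi). lia.
      * exists a, b, i. refine (conj Hab (conj Hb (conj Hi (conj Ev0 (conj Si eq_refl))))).
  - intros v v' c Hv Hv' C C'. unfold vcode in C, C'.
    destruct (vkind G v) eqn:K; destruct (vkind G v') eqn:K';
    repeat match goal with
    | H : exists _, _ |- _ => destruct H
    | H : _ /\ _ |- _ => destruct H
    end; subst c;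
    repeat match goal with
    | H : (?a < ?b)%nat, H2 : (?b < n)%nat, H3 : (?i < tau)%nat |- _ =>
        lazymatch goal with
        | _ : ((a * n + b) * tau + i < n * n * tau)%nat |- _ => fail
        | _ => pose proof (code_bound a b i ltac:(lia) H2 H3)
        end
    end; try lia.
    + match goal with
      | H5 : src G ?e = v, H1 : src G ?e' = v', Hx : ecomp G ?e ?x, Hx' : ecomp G ?e' ?y,
        Hq : ?x = ?y |- _ =>
        rewrite Hq in Hx;
        exact (start_inj v v' e e' y Hv Hv' K K' ltac:(assumption) ltac:(assumption) H5 H1 Hx Hx')
      end.
    + match goal with
      | H5 : dst G ?e = v, H1 : dst G ?e' = v', Hx : ecomp G ?e ?x, Hx' : ecomp G ?e' ?y,
        Hq : (n + ?x = n + ?y)%nat |- _ =>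
        assert (Hxy : x = y) by lia; rewrite Hxy in Hx;
        exact (end_inj v v' e e' y Hv Hv' K K' ltac:(assumption) ltac:(assumption) H5 H1 Hx Hx')
      end.
    + match goal with
      | E1 : event _ _ _ _ _ ?a ?b true (vt v), E2 : event _ _ _ _ _ ?a' ?b' true (vt v'),
        S1 : ts ?i <= vt v, S2 : ts ?i' <= vt v' |- _ =>
        apply (merge_code_inj v v' a b i a' b' i'); auto; try (split; assumption); try lia
      end.
    + match goal with
      | E1 : event _ _ _ _ _ ?a ?b false (vt v), E2 : event _ _ _ _ _ ?a' ?b' false (vt v'),
        S1 : ts ?i < vt v, S2 : ts ?i' < vt v' |- _ =>
        apply (split_code_inj v v' a b i a' b' i'); auto; try (split; assumption); try lia
      end.
Qed.

Lemma ne_le_2nv : (ne G <= 2 * nv G)%nat.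
Proof.
  pose proof (length_seq (ne G) 0) as L.
  assert (Hs := sum_count (dst G) (nv G) (seq 0 (ne G))).
  assert (Hs' : (list_sum (map (fun v => length (filter (fun e => Nat.eqb (dst G e) v) (seq 0 (ne G)))) (seq 0 (nv G))) <= 2 * length (seq 0 (nv G)))%nat).
  { apply sum_le2.
    intros v Hv. apply in_seq in Hv. destruct HR as [_ [H _]]. specialize (H v ltac:(lia)).
    unfold indeg in H. destruct (vkind G v); destruct H as [Hi _]; lia. }
  rewrite length_seq in Hs'. rewrite <- Hs in Hs'; [lia|].
  intros e He. apply in_seq in He. apply edge_ok; lia.
Qed.

Theorem upper : (nv G <= 8 * tau * n * n)%nat /\ (ne G <= 8 * tau * n * n)%nat.
Proof.
  pose proof nv_bound as Hnv. pose proof ne_le_2nv as Hne.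
  destruct n as [|n']; [simpl in *; lia|]. nia.
Qed.

End Reeb.


Lemma INR_lt1 : forall a b : nat, (a < b)%nat -> INR a + 1 <= INR b.
Proof. intros a b H. rewrite <- S_INR. apply le_INR. lia. Qed.

Lemma INR_dist : forall a b : nat, a <> b -> 1 <= (INR a - INR b) ^ 2.
Proof.
  intros a b H. destruct (Nat.lt_total a b) as [Hl|[E|Hl]]; [|contradiction|].
  - apply INR_lt1 in Hl. nra.
  - apply INR_lt1 in Hl. nra.
Qed.

Lemma INR_close : forall a b : nat, Rabs (INR a - INR b) < 1 -> a = b.
Proof.
  intros a b H. destruct (Nat.eq_dec a b) as [|Hne]; auto. exfalso.
  pose proof (INR_dist a b Hne). apply Rabs_def2 in H. nra.
Qed.

Lemma INR_half : forall a b : nat, INR a - INR b <> 1 / 2.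
Proof.
  intros a b H. destruct (Nat.le_gt_cases a b) as [Hl|Hl].
  - apply le_INR in Hl. lra.
  - apply INR_lt1 in Hl. lra.
Qed.

Lemma Rabs_le_iff : forall x a, Rabs x <= a <-> -a <= x <= a.
Proof. intros. unfold Rabs. destruct (Rcase_abs x); split; intros; lra. Qed.

Section Ex.
Variables (h w tau : nat).
Hypothesis Hh : (1 <= h)%nat.
Hypothesis Hw : (1 <= w)%nat.
Hypothesis Ht : (1 <= tau)%nat.

Local Notation n := (h + w)%nat.
Local Notation S := (S0 h w).
Local Notation PP := (P h w tau).
Local Notation cmm := (cm h w).

Definition SR := INR S.
Definition ets (i : nat) : R := INR (i * S).
Definition epts (i x : nat) : R * R :=
  if (x <? h)%nat then (INR x, 0)
  else (- INR ((x - h) * h) - 1 + (if Nat.even i then 0 else SR), 0).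
Definition eeps : R := 1 / 8.

Local Notation DC := (dconn tau ets epts eeps).
Local Notation CN := (conn n tau ets epts eeps).

Lemma SR_pos : 1 <= SR.
Proof. unfold SR, S0. rewrite plus_INR. simpl. pose proof (pos_INR (h * w)). lra. Qed.

Lemma ets_S : forall i, ets (Datatypes.S i) = ets i + SR.
Proof. intros. unfold ets, SR. rewrite <- plus_INR. f_equal. lia. Qed.

Lemma ets_inc : times_increasing tau ets.
Proof. intros i Hi. rewrite ets_S. pose proof SR_pos. lra. Qed.

Lemma ets0 : ets 0 = 0.
Proof. unfold ets. simpl. auto. Qed.

Lemma interp_A : forall i x t, (x < h)%nat -> interp ets epts i x t = (INR x, 0).
Proof.
  intros i x t Hx. unfold interp, epts.
  replace (x <? h)%nat with true by (symmetry; apply Nat.ltb_lt; auto). simpl. f_equal; ring.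
Qed.

Lemma interp_B : forall i x t, (h <= x)%nat -> interp ets epts i x t =
  (- INR ((x - h) * h) - 1 + (if Nat.even i then t - ets i else SR - (t - ets i)), 0).
Proof.
  intros i x t Hx. unfold interp, epts.
  replace (x <? h)%nat with false by (symmetry; apply Nat.ltb_ge; auto). cbn [fst snd].
  rewrite ets_S, even_S. pose proof SR_pos.
  destruct (Nat.even i); simpl; f_equal; field; lra.
Qed.

Lemma F_AB : forall i j k t, (j < h)%nat -> (k < w)%nat ->
  F ets epts i j (h + k) t = (t - INR (cM h w i j k)) ^ 2.
Proof.
  intros i j k t Hj Hk. unfold F. rewrite interp_A by auto. rewrite interp_B by lia. simpl.
  replace (h + k - h)%nat with k by lia.
  unfold cM. unfold ets, SR.
  assert (HT : (Tt h j k <= S)%nat) by (unfold Tt, S0; nia).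
  destruct (Nat.even i).
  - rewrite plus_INR. unfold Tt. rewrite !plus_INR, mult_INR. simpl. rewrite mult_INR. ring.
  - rewrite plus_INR, minus_INR by auto. unfold Tt. rewrite !plus_INR, !mult_INR. simpl. ring.
Qed.

Lemma F_AA : forall i a b t, (a < h)%nat -> (b < h)%nat -> F ets epts i a b t = (INR a - INR b) ^ 2.
Proof. intros. unfold F. rewrite !interp_A by auto. simpl. ring. Qed.

Lemma F_BB : forall i a b t, (h <= a)%nat -> (h <= b)%nat ->
  F ets epts i a b t = (INR ((b - h) * h) - INR ((a - h) * h)) ^ 2.
Proof. intros. unfold F. rewrite !interp_B by auto. simpl. destruct (Nat.even i); ring. Qed.

Definition pairrel m p q :=
  (p = mj h w m /\ q = (h + mk w m)%nat) \/ (q = mj h w m /\ p = (h + mk w m)%nat).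

Definition active t m := (m < PP)%nat /\ Rabs (t - INR (cmm m)) <= 1 / 4.

Lemma cM_real : forall i j k, (j < h)%nat -> (k < w)%nat ->
  ets i + 1 <= INR (cM h w i j k) <= ets (Datatypes.S i) - 1.
Proof.
  intros i j k Hj Hk. destruct (cM_bounds h w tau Hh Hw Ht i j k Hj Hk) as [B1 B2].
  rewrite ets_S. unfold ets, SR. split.
  - rewrite <- S_INR. apply le_INR. lia.
  - assert (INR (cM h w i j k) + 1 <= INR (i * S) + INR S); [|lra].
    rewrite <- S_INR, <- plus_INR. apply le_INR. unfold S0 in *. lia.
Qed.

Lemma DC_AB : forall m t, (m < PP)%nat -> Rabs (t - INR (cmm m)) <= 1 / 4 ->
  DC t (mj h w m) (h + mk w m).
Proof.
  intros m t Hm Ha. destruct (decode_bounds h w tau Hh Hw Ht m Hm) as [Hi [Hj Hk]].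
  pose proof (cM_real (mi h w m) (mj h w m) (mk w m) Hj Hk) as B. unfold cm in Ha.
  apply dconn_iff. exists (mi h w m). split; auto. split.
  - unfold seg. apply Rabs_le_iff in Ha. lra.
  - rewrite F_AB by auto. unfold eeps. apply Rabs_le_iff in Ha. nra.
Qed.

Lemma DCX : forall t p q, (p < n)%nat -> (q < n)%nat -> p <> q ->
  (DC t p q <-> exists m, active t m /\ pairrel m p q).
Proof.
  intros t p q Hp Hq Hpq. split.
  - intros D.
    assert (Key : forall a b, (a < h)%nat -> (h <= b < n)%nat -> DC t a b ->
       exists m, active t m /\ a = mj h w m /\ b = (h + mk w m)%nat).
    { intros a b Ha Hb Dab. apply dconn_iff in Dab. destruct Dab as [i [Hi [Si HF]]].
      replace b with (h + (b - h))%nat in HF by lia. change (F ets epts i a (h + (b - h)) t <= (2 * eeps) ^ 2) in HF.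
      rewrite F_AB in HF by lia. unfold eeps in HF.
      exists (code h w i a (b - h)). destruct (decode_code h w i a (b - h) Ha ltac:(lia)) as [_ [E1 E2]].
      split; [|split; [auto|lia]]. split; [apply code_lt; auto; lia|].
      rewrite cm_code by lia. apply Rabs_le_iff. nra. }
    destruct (Nat.lt_ge_cases p h) as [Hph|Hph]; destruct (Nat.lt_ge_cases q h) as [Hqh|Hqh].
    + exfalso. apply dconn_iff in D. destruct D as [i [_ [_ HF]]]. change (F ets epts i p q t <= (2 * eeps) ^ 2) in HF. rewrite F_AA in HF by auto.
      pose proof (INR_dist p q Hpq). unfold eeps in HF. lra.
    + destruct (Key p q Hph ltac:(lia) D) as [m [A [E1 E2]]]. exists m. split; auto. left; auto.
    + destruct (Key q p Hqh ltac:(lia) (dconn_sym _ _ _ _ _ _ _ D)) as [m [A [E1 E2]]].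
      exists m. split; auto. right; auto.
    + exfalso. apply dconn_iff in D. destruct D as [i [_ [_ HF]]]. change (F ets epts i p q t <= (2 * eeps) ^ 2) in HF. rewrite F_BB in HF by auto.
      assert ((q - h) * h <> (p - h) * h)%nat by nia.
      pose proof (INR_dist _ _ H). unfold eeps in HF. lra.
  - intros [m [[Hm Ha] Hr]]. destruct Hr as [[-> ->]|[-> ->]].
    + apply DC_AB; auto.
    + apply dconn_sym. apply DC_AB; auto.
Qed.

Lemma active_unique : forall t m m', active t m -> active t m' -> m = m'.
Proof.
  intros t m m' [Hm A] [Hm' A']. apply (cm_inj h w tau Hh Hw Ht); auto.
  apply INR_close. apply Rabs_le_iff in A; apply Rabs_le_iff in A'. apply Rabs_def1; lra.
Qed.

Lemma mj_lt : forall m, (mj h w m < h)%nat.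
Proof. intros. unfold mj. apply Nat.mod_upper_bound. lia. Qed.

Lemma pairrel_ne : forall m p q, pairrel m p q -> p <> q.
Proof. intros m p q H. pose proof (mj_lt m). destruct H as [[-> ->]|[-> ->]]; lia. Qed.

Lemma pairrel_trans : forall m p q r, pairrel m p q -> pairrel m q r -> p = r.
Proof. intros m p q r H1 H2. pose proof (mj_lt m). unfold pairrel in *. lia. Qed.

Lemma mk_lt : forall m, (mk w m < w)%nat.
Proof. intros. unfold mk. apply Nat.mod_upper_bound. lia. Qed.

Lemma pairrel_lt : forall m p q, pairrel m p q -> (p < n)%nat /\ (q < n)%nat.
Proof. intros m p q H. pose proof (mj_lt m). pose proof (mk_lt m). unfold pairrel in H. lia. Qed.

Lemma pairrel_sym : forall m p q, pairrel m p q -> pairrel m q p.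
Proof. unfold pairrel. tauto. Qed.

Lemma CS : forall t p q, CN t p q -> p = q \/ exists m, active t m /\ pairrel m p q.
Proof.
  intros t p q H. unfold conn in H. induction H as [a b Hab| a | a b c _ IH1 _ IH2].
  - destruct Hab as [Ha [Hb D]]. destruct (Nat.eq_dec a b) as [|Hne]; [left; auto|right]. apply DCX; auto.
  - left; auto.
  - destruct IH1 as [ -> |[m [A1 R1]]]; auto.
    destruct IH2 as [ <- |[m' [A2 R2]]]; [right; exists m; auto|].
    rewrite <- (active_unique t m m' A1 A2) in R2. left. eapply pairrel_trans; eauto.
Qed.

Lemma CS_rev : forall t m p q, active t m -> pairrel m p q -> CN t p q.
Proof.
  intros t m p q A R. destruct (pairrel_lt m p q R). apply rt_step. split; auto. split; auto.
  apply DCX; auto. eapply pairrel_ne; eauto. exists m; auto.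
Qed.

Definition pairset m y := y = mj h w m \/ y = (h + mk w m)%nat.

Lemma comp_pair : forall t m, active t m -> IsComp n tau ets epts eeps t (pairset m).
Proof.
  intros t m A. exists (mj h w m). pose proof (mj_lt m). pose proof (mk_lt m). split; [lia|].
  intros y. split.
  - intros [ -> | -> ]; split; try lia; [apply rt_refl|]. apply (CS_rev t m); auto. left; auto.
  - intros [Hy C]. apply CS in C. destruct C as [ <- |[m' [A' R]]]; [left; auto|].
    rewrite <- (active_unique t m m' A A') in R. unfold pairset, pairrel in *. lia.
Qed.

Lemma comp_single : forall t x, (x < n)%nat -> (forall m, active t m -> ~ inpair h w m x) ->
  IsComp n tau ets epts eeps t (fun y => y = x).
Proof.
  intros t x Hx Hn. exists x. split; auto. intros y. split.
  - intros ->. split; auto. apply rt_refl.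
  - intros [Hy C]. apply CS in C. destruct C as [ <- |[m [A R]]]; auto.
    exfalso. apply (Hn m A). unfold inpair, pairrel in *. tauto.
Qed.

Lemma comp_classify : forall t C, IsComp n tau ets epts eeps t C ->
  (exists x, (x < n)%nat /\ (forall m, active t m -> ~ inpair h w m x) /\ sameset C (fun y => y = x)) \/
  (exists m, active t m /\ sameset C (pairset m)).
Proof.
  intros t C [x [Hx HC]].
  destruct (classic (exists m, active t m /\ inpair h w m x)) as [[m [A I]]|N].
  - right. exists m. split; auto. intros y. rewrite HC. split.
    + intros [Hy Cn]. apply CS in Cn. destruct Cn as [ <- |[m' [A' R]]].
      * unfold inpair, pairset in *. tauto.
      * rewrite <- (active_unique t m m' A A') in R. unfold pairset, pairrel in *. lia.
    + intros Py. assert (y < n)%nat by (pose proof (mj_lt m); pose proof (mk_lt m); unfold pairset in Py; lia).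
      split; auto. destruct (Nat.eq_dec x y) as [ <- |Hne]; [apply rt_refl|].
      apply (CS_rev t m); auto. unfold pairrel, pairset, inpair in *. pose proof (mj_lt m). lia.
  - left. exists x. split; auto. split.
    + intros m A I. apply N. exists m; auto.
    + intros y. rewrite HC. split.
      * intros [Hy Cn]. apply CS in Cn. destruct Cn as [ <- |[m [A R]]]; auto.
        exfalso. apply N. exists m. split; auto. unfold inpair, pairrel in *. tauto.
      * intros ->. split; auto. apply rt_refl.
Qed.

Lemma ets_tau : ets tau = INR (tau * S).
Proof. auto. Qed.

Lemma cm_real : forall m, (m < PP)%nat -> 1 <= INR (cmm m) /\ INR (cmm m) + 1 <= ets tau.
Proof.
  intros m Hm. destruct (cm_bounds h w tau Hh Hw Ht m Hm) as [B1 B2]. unfold ets.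
  split; [apply (le_INR 1); auto|]. rewrite <- S_INR. apply le_INR. lia.
Qed.

Lemma ev_conn : forall x y t, becomes_connected tau ets epts eeps x y t -> (x < n)%nat -> (y < n)%nat ->
  x <> y -> exists m, (m < PP)%nat /\ pairrel m x y /\ t = INR (cmm m) - 1 / 4.
Proof.
  intros x y t [Dm [D Hb]] Hx Hy Hxy. apply DCX in D; auto. destruct D as [m [[Hm A] R]].
  exists m. split; auto. split; auto. apply Rabs_le_iff in A.
  destruct (Req_dec t (INR (cmm m) - 1 / 4)) as [E|E]; auto. exfalso.
  destruct (Hb (t - (INR (cmm m) - 1/4)) ltac:(lra)) as [s [Ds [Hs N]]]. apply N.
  apply DCX; auto. exists m. split; auto. split; auto. apply Rabs_le_iff. lra.
Qed.

Lemma ev_disc : forall x y t, becomes_disconnected tau ets epts eeps x y t -> (x < n)%nat -> (y < n)%nat ->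
  x <> y -> exists m, (m < PP)%nat /\ pairrel m x y /\ t = INR (cmm m) + 1 / 4.
Proof.
  intros x y t [Dm [D Hb]] Hx Hy Hxy. apply DCX in D; auto. destruct D as [m [[Hm A] R]].
  exists m. split; auto. split; auto. apply Rabs_le_iff in A.
  destruct (Req_dec t (INR (cmm m) + 1 / 4)) as [E|E]; auto. exfalso.
  destruct (Hb ((INR (cmm m) + 1/4) - t) ltac:(lra)) as [s [Ds [Hs N]]]. apply N.
  apply DCX; auto. exists m. split; auto. split; auto. apply Rabs_le_iff. lra.
Qed.

Lemma ev_time : forall x y b t, event n tau ets epts eeps x y b t ->
  exists m, (m < PP)%nat /\ x = mj h w m /\ y = (h + mk w m)%nat /\
    t = INR (cmm m) + (if b then - (1/4) else 1/4).
Proof.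
  intros x y b t [Hxy [Hy E]].
  assert (Fix : forall m, pairrel m x y -> x = mj h w m /\ y = (h + mk w m)%nat).
  { intros m R. pose proof (mj_lt m). unfold pairrel in R. lia. }
  destruct b.
  - destruct (ev_conn x y t E ltac:(lia) Hy ltac:(lia)) as [m [Hm [R T]]].
    exists m. destruct (Fix m R). repeat split; auto; rewrite T; lra.
  - destruct (ev_disc x y t E ltac:(lia) Hy ltac:(lia)) as [m [Hm [R T]]].
    exists m. destruct (Fix m R). repeat split; auto.
Qed.

Lemma ex_GP : general_position n tau ets epts eeps.
Proof.
  split.
  - intros x y b t x' y' b' t' E E' Hne Et. subst t'. apply Hne.
    destruct (ev_time x y b t E) as [m [Hm [Ex [Ey Tm]]]].
    destruct (ev_time x' y' b' t E') as [m' [Hm' [Ex' [Ey' Tm']]]].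
    assert (Hb : b = b').
    { destruct b, b'; auto; exfalso; cbn in Tm, Tm'; rewrite Tm in Tm'.
      - apply (INR_half (cmm m) (cmm m')). lra.
      - apply (INR_half (cmm m') (cmm m)). lra. }
    subst b'. rewrite Tm in Tm'. assert (INR (cmm m) = INR (cmm m')) by lra.
    apply INR_eq in H. apply (cm_inj h w tau Hh Hw Ht) in H; auto. subst. auto.
  - intros x y b t E. destruct (ev_time x y b t E) as [m [Hm [_ [_ Tm]]]].
    destruct (cm_real m Hm). rewrite ets0. destruct b; lra.
Qed.

End Ex.


Lemma count_exact : forall (f : nat -> bool) N L, NoDup L -> (forall e, In e L -> (e < N)%nat) ->
  (forall e, (e < N)%nat -> (f e = true <-> In e L)) -> length (filter f (seq 0 N)) = length L.
Proof.
  intros f N L ND HL Hf. apply Permutation_length. apply NoDup_Permutation.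
  - apply NoDup_filter, seq_NoDup.
  - auto.
  - intros e. rewrite filter_In, in_seq. split.
    + intros [He Fe]. apply Hf; auto; lia.
    + intros I. pose proof (HL e I). split; [lia|]. apply Hf; auto.
Qed.

Section Graph.
Variables (h w tau : nat).
Hypothesis Hh : (1 <= h)%nat.
Hypothesis Hw : (1 <= w)%nat.
Hypothesis Ht : (1 <= tau)%nat.

Local Notation n := (h + w)%nat.
Local Notation PP := (P h w tau).
Local Notation cmm := (cm h w).
Local Notation mjj := (mj h w).
Local Notation mkk := (mk w).
Local Notation Rxx := (Rx h w tau).
Local Notation mx := (meetx h w).
Local Notation rx := (rankx h w).

Definition side x : nat := if (x <? h)%nat then 0%nat else 1%nat.

Definition eid x r : nat :=
  match r with
  | O => (PP + x)%nat
  | Datatypes.S r' => (PP + n + 2 * mx x r' + side x)%nat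
  end.

Definition eX e : nat :=
  if (e <? PP + n)%nat then (e - PP)%nat
  else let d := (e - PP - n)%nat in
       if Nat.odd d then (h + mkk (Nat.div2 d))%nat else mjj (Nat.div2 d).

Definition eR e : nat :=
  if (e <? PP + n)%nat then 0%nat
  else Datatypes.S (rx (eX e) (Nat.div2 (e - PP - n))).

Definition NV := (2 * n + 2 * PP)%nat.
Definition NE := (PP + n + 2 * PP)%nat.

Definition Vsrc x r : nat :=
  match r with
  | O => x
  | Datatypes.S r' => (2 * n + 2 * mx x r' + 1)%nat
  end.

Definition Vdst x r : nat :=
  if (r =? Rxx x)%nat then (n + x)%nat else (2 * n + 2 * mx x r)%nat.

Definition gsrc e : nat := if (e <? PP)%nat then (2 * n + 2 * e)%nat else Vsrc (eX e) (eR e).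
Definition gdst e : nat := if (e <? PP)%nat then (2 * n + 2 * e + 1)%nat else Vdst (eX e) (eR e).
Definition gcomp e : nat -> Prop := if (e <? PP)%nat then pairset h w e else (fun y => y = eX e).

Definition gkind v : VKind :=
  if (v <? n)%nat then VStart else if (v <? 2 * n)%nat then VEnd
  else if Nat.even (v - 2 * n) then VMerge else VSplit.

Definition gtime v : R :=
  if (v <? n)%nat then ets h w 0 else if (v <? 2 * n)%nat then ets h w tau
  else if Nat.even (v - 2 * n) then INR (cmm (Nat.div2 (v - 2 * n))) - 1 / 4
  else INR (cmm (Nat.div2 (v - 2 * n))) + 1 / 4.

Definition GG : ReebGraph := {| nv := NV; ne := NE; src := gsrc; dst := gdst;
  vtime := gtime; vkind := gkind; ecomp := gcomp |}.

Lemma side_ok : forall m x, inpair h w m x -> side x = (if (x <? h)%nat then 0 else 1)%nat.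
Proof. auto. Qed.

Lemma D1 : forall x r, (x < n)%nat -> (r <= Rxx x)%nat ->
  (PP <= eid x r < NE)%nat /\ eX (eid x r) = x /\ eR (eid x r) = r.
Proof.
  intros x r Hx Hr. destruct r as [|r].
  - simpl. unfold eX, eR, NE. replace (PP + x <? PP + n)%nat with true by (symmetry; apply Nat.ltb_lt; lia).
    repeat split; lia.
  - destruct (G1 h w tau Hh Hw Ht x r Hx ltac:(lia)) as [Hm Ip].
    change (eid x (Datatypes.S r)) with (PP + n + 2 * mx x r + side x)%nat. set (m := mx x r) in *.
    assert (Hd : (PP + n + 2 * m + side x - PP - n = 2 * m + side x)%nat) by lia.
    assert (Hs : (side x <= 1)%nat) by (unfold side; destruct (x <? h)%nat; lia).
    assert (Hdiv : Nat.div2 (2 * m + side x) = m).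
    { unfold side; destruct (x <? h)%nat; [rewrite Nat.add_0_r; apply Nat.div2_double|apply Nat.div2_odd']. }
    assert (HX : eX (PP + n + 2 * m + side x) = x).
    { unfold eX. replace (PP + n + 2 * m + side x <? PP + n)%nat with false by (symmetry; apply Nat.ltb_ge; lia).
      cbv zeta. rewrite Hd, Hdiv. unfold side, inpair in *. pose proof (mj_lt h w tau Hh Hw Ht m).
      destruct (x <? h)%nat eqn:E.
      - rewrite Nat.add_0_r, Nat.odd_even. apply Nat.ltb_lt in E. lia.
      - rewrite Nat.odd_odd. apply Nat.ltb_ge in E. lia. }
    split; [unfold NE; lia|]. split; auto.
    unfold eR. replace (PP + n + 2 * m + side x <? PP + n)%nat with false by (symmetry; apply Nat.ltb_ge; lia).
    rewrite HX. replace (PP + n + 2 * m + side x - PP - n)%nat with (2 * m + side x)%nat by lia.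
    rewrite Hdiv. unfold m. rewrite (G3 h w tau Hh Hw Ht x r Hx); auto; lia.
Qed.

Lemma D2 : forall e, (PP <= e < NE)%nat ->
  (eX e < n)%nat /\ (eR e <= Rxx (eX e))%nat /\ eid (eX e) (eR e) = e.
Proof.
  intros e He. unfold NE in He. destruct (e <? PP + n)%nat eqn:E.
  - apply Nat.ltb_lt in E. unfold eX, eR. rewrite (proj2 (Nat.ltb_lt _ _) E).
    split; [lia|]. split; [lia|]. simpl. lia.
  - pose proof E as Eb. apply Nat.ltb_ge in E. set (d := (e - PP - n)%nat).
    pose proof (Nat.div2_odd d) as Hd. set (m := Nat.div2 d) in *.
    assert (Hb : (Nat.b2n (Nat.odd d) <= 1)%nat) by (destruct (Nat.odd d); simpl; lia).
    assert (Hm : (m < PP)%nat) by lia.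
    pose proof (mj_lt h w tau Hh Hw Ht m). pose proof (mk_lt h w tau Hh Hw Ht m).
    assert (HX : eX e = if Nat.odd d then (h + mkk m)%nat else mjj m).
    { unfold eX. rewrite Eb. auto. }
    assert (Ip : inpair h w m (eX e)) by (rewrite HX; unfold inpair; destruct (Nat.odd d); auto).
    assert (Hxn : (eX e < n)%nat) by (rewrite HX; destruct (Nat.odd d); lia).
    destruct (G2 h w tau Hh Hw Ht m (eX e) Hm Hxn Ip) as [Hr Hmm].
    assert (HR : eR e = Datatypes.S (rx (eX e) m)) by (unfold eR; rewrite Eb; auto).
    split; auto. split; [rewrite HR; lia|]. rewrite HR.
    change (eid (eX e) (Datatypes.S (rx (eX e) m))) with (PP + n + 2 * mx (eX e) (rx (eX e) m) + side (eX e))%nat.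
    rewrite Hmm. unfold side. rewrite HX.
    destruct (Nat.odd d) eqn:Od; simpl in Hd.
    + replace (h + mkk m <? h)%nat with false by (symmetry; apply Nat.ltb_ge; lia). lia.
    + replace (mjj m <? h)%nat with true by (symmetry; apply Nat.ltb_lt; lia). lia.
Qed.

Lemma eid_inj : forall x r x' r', (x < n)%nat -> (r <= Rxx x)%nat -> (x' < n)%nat -> (r' <= Rxx x')%nat ->
  eid x r = eid x' r' -> x = x' /\ r = r'.
Proof.
  intros x r x' r' Hx Hr Hx' Hr' E.
  destruct (D1 x r Hx Hr) as [_ [E1 E2]]. destruct (D1 x' r' Hx' Hr') as [_ [E1' E2']].
  rewrite E in E1, E2. split; congruence.
Qed.

Lemma edge_cases : forall e, (e < NE)%nat ->
  (e < PP)%nat \/ exists x r, (x < n)%nat /\ (r <= Rxx x)%nat /\ e = eid x r.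
Proof.
  intros e He. destruct (Nat.lt_ge_cases e PP) as [H|H]; [left; auto|right].
  destruct (D2 e ltac:(lia)) as [A [B C]]. exists (eX e), (eR e). auto.
Qed.

Lemma src_single : forall x r, (x < n)%nat -> (r <= Rxx x)%nat -> gsrc (eid x r) = Vsrc x r.
Proof.
  intros x r Hx Hr. destruct (D1 x r Hx Hr) as [B [E1 E2]]. unfold gsrc.
  replace (eid x r <? PP)%nat with false by (symmetry; apply Nat.ltb_ge; lia). rewrite E1, E2. auto.
Qed.

Lemma dst_single : forall x r, (x < n)%nat -> (r <= Rxx x)%nat -> gdst (eid x r) = Vdst x r.
Proof.
  intros x r Hx Hr. destruct (D1 x r Hx Hr) as [B [E1 E2]]. unfold gdst.
  replace (eid x r <? PP)%nat with false by (symmetry; apply Nat.ltb_ge; lia). rewrite E1, E2. auto.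
Qed.

Lemma comp_single_e : forall x r, (x < n)%nat -> (r <= Rxx x)%nat -> gcomp (eid x r) = (fun y => y = x).
Proof.
  intros x r Hx Hr. destruct (D1 x r Hx Hr) as [B [E1 E2]]. unfold gcomp.
  replace (eid x r <? PP)%nat with false by (symmetry; apply Nat.ltb_ge; lia). rewrite E1. auto.
Qed.

Lemma pair_e : forall e, (e < PP)%nat -> gsrc e = (2 * n + 2 * e)%nat /\ gdst e = (2 * n + 2 * e + 1)%nat /\
  gcomp e = pairset h w e.
Proof.
  intros e He. unfold gsrc, gdst, gcomp. replace (e <? PP)%nat with true by (symmetry; apply Nat.ltb_lt; auto).
  auto.
Qed.

Lemma vk_start : forall x, (x < n)%nat -> gkind x = VStart /\ gtime x = ets h w 0.
Proof.
  intros x Hx. unfold gkind, gtime. replace (x <? n)%nat with true by (symmetry; apply Nat.ltb_lt; auto). auto.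
Qed.

Lemma vk_end : forall x, (x < n)%nat -> gkind (n + x) = VEnd /\ gtime (n + x) = ets h w tau.
Proof.
  intros x Hx. unfold gkind, gtime. replace (n + x <? n)%nat with false by (symmetry; apply Nat.ltb_ge; lia).
  replace (n + x <? 2 * n)%nat with true by (symmetry; apply Nat.ltb_lt; lia). auto.
Qed.

Lemma vk_merge : forall m, gkind (2 * n + 2 * m) = VMerge /\ gtime (2 * n + 2 * m) = INR (cmm m) - 1 / 4.
Proof.
  intros m. unfold gkind, gtime. replace (2 * n + 2 * m <? n)%nat with false by (symmetry; apply Nat.ltb_ge; lia).
  replace (2 * n + 2 * m <? 2 * n)%nat with false by (symmetry; apply Nat.ltb_ge; lia).
  replace (2 * n + 2 * m - 2 * n)%nat with (2 * m)%nat by lia.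
  rewrite Nat.even_even, Nat.div2_double. auto.
Qed.

Lemma vk_split : forall m, gkind (2 * n + 2 * m + 1) = VSplit /\ gtime (2 * n + 2 * m + 1) = INR (cmm m) + 1 / 4.
Proof.
  intros m. unfold gkind, gtime. replace (2 * n + 2 * m + 1 <? n)%nat with false by (symmetry; apply Nat.ltb_ge; lia).
  replace (2 * n + 2 * m + 1 <? 2 * n)%nat with false by (symmetry; apply Nat.ltb_ge; lia).
  replace (2 * n + 2 * m + 1 - 2 * n)%nat with (2 * m + 1)%nat by lia.
  rewrite Nat.even_odd, Nat.div2_odd'. auto.
Qed.

Lemma vertex_cases : forall v, (v < NV)%nat ->
  (v < n)%nat \/ (exists x, (x < n)%nat /\ v = (n + x)%nat) \/
  (exists m, (m < PP)%nat /\ v = (2 * n + 2 * m)%nat) \/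
  (exists m, (m < PP)%nat /\ v = (2 * n + 2 * m + 1)%nat).
Proof.
  intros v Hv. unfold NV in Hv.
  destruct (Nat.lt_ge_cases v n) as [H|H]; [left; auto|right].
  destruct (Nat.lt_ge_cases v (2 * n)) as [H2|H2]; [left; exists (v - n)%nat; split; lia|right].
  pose proof (Nat.div2_odd (v - 2 * n)) as Hd. set (m := Nat.div2 (v - 2 * n)) in *.
  destruct (Nat.odd (v - 2 * n)); simpl in Hd.
  - right. exists m. split; lia.
  - left. exists m. split; lia.
Qed.

End Graph.


Section Proof.
Variables (h w tau : nat).
Hypothesis Hh : (1 <= h)%nat.
Hypothesis Hw : (1 <= w)%nat.
Hypothesis Ht : (1 <= tau)%nat.

Local Notation n := (h + w)%nat.
Local Notation PP := (P h w tau).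
Local Notation cmm := (cm h w).
Local Notation mjj := (mj h w).
Local Notation mkk := (mk w).
Local Notation Rxx := (Rx h w tau).
Local Notation mx := (meetx h w).
Local Notation rx := (rankx h w).
Local Notation eidd := (eid h w tau).
Local Notation ACT := (active h w tau).
Local Notation IC := (IsComp n tau (ets h w) (epts h w) eeps).

Lemma vkS : forall x, (x < n)%nat -> gkind h w x = VStart /\ gtime h w tau x = ets h w 0.
Proof. exact (vk_start h w tau). Qed.
Lemma vkE : forall x, (x < n)%nat -> gkind h w (n + x) = VEnd /\ gtime h w tau (n + x) = ets h w tau.
Proof. exact (vk_end h w tau Hh Hw Ht). Qed.
Lemma vkM : forall m, gkind h w (2 * n + 2 * m) = VMerge /\ gtime h w tau (2 * n + 2 * m) = INR (cmm m) - 1 / 4.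
Proof. exact (vk_merge h w tau Hh Hw Ht). Qed.
Lemma vkP : forall m, gkind h w (2 * n + 2 * m + 1) = VSplit /\ gtime h w tau (2 * n + 2 * m + 1) = INR (cmm m) + 1 / 4.
Proof. exact (vk_split h w tau Hh Hw Ht). Qed.

Definition Ts x r : R := match r with O => ets h w 0 | Datatypes.S r' => INR (cmm (mx x r')) + 1 / 4 end.
Definition Td x r : R := if (r =? Rxx x)%nat then ets h w tau else INR (cmm (mx x r)) - 1 / 4.

Lemma mx_lt : forall x r, (x < n)%nat -> (r < Rxx x)%nat -> (mx x r < PP)%nat.
Proof. intros. apply (G1 h w tau Hh Hw Ht); auto. Qed.

Lemma Vsrc_ok : forall x r, (x < n)%nat -> (r <= Rxx x)%nat ->
  (Vsrc h w x r < NV h w tau)%nat /\ gtime h w tau (Vsrc h w x r) = Ts x r.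
Proof.
  intros x r Hx Hr. unfold NV. destruct r as [|r].
  - simpl. split; [lia|]. apply vkS; auto.
  - simpl Vsrc. pose proof (mx_lt x r Hx ltac:(lia)). split; [lia|]. apply vkP.
Qed.

Lemma Vdst_ok : forall x r, (x < n)%nat -> (r <= Rxx x)%nat ->
  (Vdst h w tau x r < NV h w tau)%nat /\ gtime h w tau (Vdst h w tau x r) = Td x r.
Proof.
  intros x r Hx Hr. unfold NV, Vdst, Td. destruct (r =? Rxx x)%nat eqn:E.
  - split; [lia|]. apply vkE; auto.
  - apply Nat.eqb_neq in E. pose proof (mx_lt x r Hx ltac:(lia)). split; [lia|]. apply vkM.
Qed.

Lemma cm_lt_INR : forall x r r', (x < n)%nat -> (r < r')%nat -> (r' < Rxx x)%nat ->
  INR (cmm (mx x r)) + 1 <= INR (cmm (mx x r')).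
Proof. intros. apply INR_lt1. apply (G5 h w tau Hh Hw Ht); auto. Qed.

Lemma cm_le_INR : forall x r r', (x < n)%nat -> (r <= r')%nat -> (r' < Rxx x)%nat ->
  INR (cmm (mx x r)) <= INR (cmm (mx x r')).
Proof. intros. apply le_INR. apply (G5le h w tau Hh Hw Ht); auto. Qed.

Lemma cmR : forall m, (m < PP)%nat -> 1 <= INR (cmm m) /\ INR (cmm m) + 1 <= ets h w tau.
Proof. apply (cm_real h w tau Hh Hw Ht). Qed.

Lemma Ts_lt_Td : forall x r, (x < n)%nat -> (r <= Rxx x)%nat -> Ts x r < Td x r.
Proof.
  intros x r Hx Hr. pose proof (Rx_pos h w tau Hh Hw Ht x). unfold Ts, Td.
  destruct r as [|r].
  - rewrite ets0. replace (0 =? Rxx x)%nat with false by (symmetry; apply Nat.eqb_neq; lia).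
    destruct (cmR (mx x 0) (mx_lt x 0 Hx ltac:(lia))). lra.
  - destruct (Datatypes.S r =? Rxx x)%nat eqn:E.
    + destruct (cmR (mx x r) (mx_lt x r Hx ltac:(lia))). lra.
    + apply Nat.eqb_neq in E. pose proof (cm_lt_INR x r (Datatypes.S r) Hx ltac:(lia) ltac:(lia)). lra.
Qed.

Lemma nomeet : forall x r t, (x < n)%nat -> (r <= Rxx x)%nat -> Ts x r < t < Td x r ->
  forall m, ACT t m -> ~ inpair h w m x.
Proof.
  intros x r t Hx Hr Htt m [Hm A] Ip. apply Rabs_le_iff in A.
  destruct (G2 h w tau Hh Hw Ht m x Hm Hx Ip) as [Hr' Hmm].
  set (r' := rx x m) in *.
  destruct (Nat.lt_ge_cases r' r) as [Hl|Hl].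
  - destruct r as [|r0]; [lia|]. simpl in Htt.
    pose proof (cm_le_INR x r' r0 Hx ltac:(lia) ltac:(lia)). rewrite Hmm in H. lra.
  - unfold Td in Htt. replace (r =? Rxx x)%nat with false in Htt by (symmetry; apply Nat.eqb_neq; lia).
    pose proof (cm_le_INR x r r' Hx Hl Hr'). rewrite Hmm in H. lra.
Qed.

Lemma R1 : forall e, (e < NE h w tau)%nat ->
  (gsrc h w tau e < NV h w tau)%nat /\ (gdst h w tau e < NV h w tau)%nat /\
  gtime h w tau (gsrc h w tau e) < gtime h w tau (gdst h w tau e) /\
  forall t, gtime h w tau (gsrc h w tau e) < t < gtime h w tau (gdst h w tau e) -> IC t (gcomp h w tau e).
Proof.
  intros e He. destruct (edge_cases h w tau Hh Hw Ht e He) as [Hp|[x [r [Hx [Hr ->]]]]].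
  - destruct (pair_e h w tau e Hp) as [-> [-> ->]]. unfold NV.
    destruct (vkM e) as [_ ->]. destruct (vkP e) as [_ ->].
    split; [lia|]. split; [lia|]. split; [lra|].
    intros t Htt. apply (comp_pair h w tau Hh Hw Ht). split; auto. apply Rabs_le_iff. lra.
  - rewrite (src_single h w tau Hh Hw Ht), (dst_single h w tau Hh Hw Ht), (comp_single_e h w tau Hh Hw Ht) by auto.
    destruct (Vsrc_ok x r Hx Hr) as [S1 ->]. destruct (Vdst_ok x r Hx Hr) as [S2 ->].
    split; auto. split; auto. split; [apply Ts_lt_Td; auto|].
    intros t Htt. apply (comp_single h w tau Hh Hw Ht); auto. eapply nomeet; eauto.
Qed.

Local Notation NEE := (NE h w tau).
Local Notation NVV := (NV h w tau).
Local Notation gs := (gsrc h w tau).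
Local Notation gd := (gdst h w tau).

Lemma rx_ok : forall m x, (m < PP)%nat -> inpair h w m x -> (x < n)%nat /\ (rx x m < Rxx x)%nat /\ mx x (rx x m) = m.
Proof.
  intros m x Hm Ip. assert (Hx : (x < n)%nat).
  { pose proof (mj_lt h w tau Hh Hw Ht m). pose proof (mk_lt h w tau Hh Hw Ht m). unfold inpair in Ip. lia. }
  destruct (G2 h w tau Hh Hw Ht m x Hm Hx Ip). auto.
Qed.

Lemma eid_lt : forall x r, (x < n)%nat -> (r <= Rxx x)%nat -> (eidd x r < NEE)%nat.
Proof. intros. destruct (D1 h w tau Hh Hw Ht x r H H0) as [[_ ?] _]. auto. Qed.

Lemma gs_single : forall x r, (x < n)%nat -> (r <= Rxx x)%nat -> gs (eidd x r) = Vsrc h w x r.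
Proof. intros. apply (src_single h w tau Hh Hw Ht); auto. Qed.
Lemma gd_single : forall x r, (x < n)%nat -> (r <= Rxx x)%nat -> gd (eidd x r) = Vdst h w tau x r.
Proof. intros. apply (dst_single h w tau Hh Hw Ht); auto. Qed.

Lemma inpair_cases : forall m x, inpair h w m x <-> x = mjj m \/ x = (h + mkk m)%nat.
Proof. intros. unfold inpair. tauto. Qed.

Lemma mj_ne_mk : forall m, mjj m <> (h + mkk m)%nat.
Proof. intros. pose proof (mj_lt h w tau Hh Hw Ht m). lia. Qed.

Lemma src_start : forall e x, (e < NEE)%nat -> (x < n)%nat -> (gs e = x <-> e = eidd x 0).
Proof.
  intros e x He Hx. split.
  - intros E. destruct (edge_cases h w tau Hh Hw Ht e He) as [Hp|[x' [r' [Hx' [Hr' ->]]]]].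
    + destruct (pair_e h w tau e Hp) as [Es _]. lia.
    + rewrite gs_single in E by auto. destruct r' as [|r'].
      * simpl in E. subst. auto.
      * simpl in E. lia.
  - intros ->. rewrite gs_single; auto; lia.
Qed.

Lemma src_not_end : forall e x, (e < NEE)%nat -> (x < n)%nat -> gs e <> (n + x)%nat.
Proof.
  intros e x He Hx E. destruct (edge_cases h w tau Hh Hw Ht e He) as [Hp|[x' [r' [Hx' [Hr' ->]]]]].
  - destruct (pair_e h w tau e Hp) as [Es _]. lia.
  - rewrite gs_single in E by auto. destruct r' as [|r']; simpl in E; lia.
Qed.

Lemma src_merge : forall e m, (e < NEE)%nat -> (m < PP)%nat -> (gs e = (2 * n + 2 * m)%nat <-> e = m).
Proof.
  intros e m He Hm. split.
  - intros E. destruct (edge_cases h w tau Hh Hw Ht e He) as [Hp|[x' [r' [Hx' [Hr' ->]]]]].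
    + destruct (pair_e h w tau e Hp) as [Es _]. lia.
    + rewrite gs_single in E by auto. destruct r' as [|r']; simpl in E; lia.
  - intros ->. destruct (pair_e h w tau m Hm) as [Es _]. auto.
Qed.

Lemma src_split : forall e m, (e < NEE)%nat -> (m < PP)%nat ->
  (gs e = (2 * n + 2 * m + 1)%nat <->
   In e [eidd (mjj m) (Datatypes.S (rx (mjj m) m)); eidd (h + mkk m) (Datatypes.S (rx (h + mkk m) m))]).
Proof.
  intros e m He Hm. split.
  - intros E. destruct (edge_cases h w tau Hh Hw Ht e He) as [Hp|[x' [r' [Hx' [Hr' ->]]]]].
    + destruct (pair_e h w tau e Hp) as [Es _]. lia.
    + rewrite gs_single in E by auto. destruct r' as [|r']; simpl in E; [lia|].
      assert (Em : mx x' r' = m) by lia.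
      destruct (G1 h w tau Hh Hw Ht x' r' Hx' ltac:(lia)) as [_ Ip]. rewrite Em in Ip.
      pose proof (G3 h w tau Hh Hw Ht x' r' Hx' ltac:(lia)) as Er. rewrite Em in Er.
      apply inpair_cases in Ip. simpl. destruct Ip as [->| ->]; [left|right; left]; rewrite Er; auto.
  - intros I. simpl in I.
    assert (K : forall x, inpair h w m x -> gs (eidd x (Datatypes.S (rx x m))) = (2 * n + 2 * m + 1)%nat).
    { intros x Ip. destruct (rx_ok m x Hm Ip) as [Hx [Hr Hmm]].
      rewrite gs_single by (auto; lia). simpl. rewrite Hmm. lia. }
    destruct I as [<-|[<-|[]]]; apply K; unfold inpair; auto.
Qed.

Lemma dst_not_start : forall e x, (e < NEE)%nat -> (x < n)%nat -> gd e <> x.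
Proof.
  intros e x He Hx E. destruct (edge_cases h w tau Hh Hw Ht e He) as [Hp|[x' [r' [Hx' [Hr' ->]]]]].
  - destruct (pair_e h w tau e Hp) as [_ [Ed _]]. lia.
  - rewrite gd_single in E by auto. unfold Vdst in E. destruct (r' =? Rxx x')%nat; lia.
Qed.

Lemma dst_end : forall e x, (e < NEE)%nat -> (x < n)%nat -> (gd e = (n + x)%nat <-> e = eidd x (Rxx x)).
Proof.
  intros e x He Hx. split.
  - intros E. destruct (edge_cases h w tau Hh Hw Ht e He) as [Hp|[x' [r' [Hx' [Hr' ->]]]]].
    + destruct (pair_e h w tau e Hp) as [_ [Ed _]]. lia.
    + rewrite gd_single in E by auto. unfold Vdst in E. destruct (r' =? Rxx x')%nat eqn:Er; [|lia].
      apply Nat.eqb_eq in Er. assert (x' = x) by lia. subst. auto.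
  - intros ->. rewrite gd_single; auto. unfold Vdst. rewrite Nat.eqb_refl. auto.
Qed.

Lemma dst_merge : forall e m, (e < NEE)%nat -> (m < PP)%nat ->
  (gd e = (2 * n + 2 * m)%nat <->
   In e [eidd (mjj m) (rx (mjj m) m); eidd (h + mkk m) (rx (h + mkk m) m)]).
Proof.
  intros e m He Hm. split.
  - intros E. destruct (edge_cases h w tau Hh Hw Ht e He) as [Hp|[x' [r' [Hx' [Hr' ->]]]]].
    + destruct (pair_e h w tau e Hp) as [_ [Ed _]]. lia.
    + rewrite gd_single in E by auto. unfold Vdst in E. destruct (r' =? Rxx x')%nat eqn:Erx; [lia|].
      apply Nat.eqb_neq in Erx.
      assert (Em : mx x' r' = m) by lia.
      destruct (G1 h w tau Hh Hw Ht x' r' Hx' ltac:(lia)) as [_ Ip]. rewrite Em in Ip.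
      pose proof (G3 h w tau Hh Hw Ht x' r' Hx' ltac:(lia)) as Er. rewrite Em in Er.
      apply inpair_cases in Ip. simpl. destruct Ip as [->| ->]; [left|right; left]; rewrite Er; auto.
  - intros I. simpl in I.
    assert (K : forall x, inpair h w m x -> gd (eidd x (rx x m)) = (2 * n + 2 * m)%nat).
    { intros x Ip. destruct (rx_ok m x Hm Ip) as [Hx [Hr Hmm]].
      rewrite gd_single by (auto; lia). unfold Vdst.
      replace (rx x m =? Rxx x)%nat with false by (symmetry; apply Nat.eqb_neq; lia). rewrite Hmm. auto. }
    destruct I as [<-|[<-|[]]]; apply K; unfold inpair; auto.
Qed.

Lemma dst_split : forall e m, (e < NEE)%nat -> (m < PP)%nat -> (gd e = (2 * n + 2 * m + 1)%nat <-> e = m).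
Proof.
  intros e m He Hm. split.
  - intros E. destruct (edge_cases h w tau Hh Hw Ht e He) as [Hp|[x' [r' [Hx' [Hr' ->]]]]].
    + destruct (pair_e h w tau e Hp) as [_ [Ed _]]. lia.
    + rewrite gd_single in E by auto. unfold Vdst in E. destruct (r' =? Rxx x')%nat; lia.
  - intros ->. destruct (pair_e h w tau m Hm) as [_ [Ed _]]. auto.
Qed.

Local Notation GG0 := (GG h w tau).

Lemma deg_in : forall v L, NoDup L -> (forall e, In e L -> (e < NEE)%nat) ->
  (forall e, (e < NEE)%nat -> (gd e = v <-> In e L)) -> indeg GG0 v = length L.
Proof.
  intros v L ND HL Hc. unfold indeg. cbn. apply count_exact; auto.
  intros e He. rewrite Nat.eqb_eq. apply Hc; auto.
Qed.

Lemma deg_out : forall v L, NoDup L -> (forall e, In e L -> (e < NEE)%nat) ->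
  (forall e, (e < NEE)%nat -> (gs e = v <-> In e L)) -> outdeg GG0 v = length L.
Proof.
  intros v L ND HL Hc. unfold outdeg. cbn. apply count_exact; auto.
  intros e He. rewrite Nat.eqb_eq. apply Hc; auto.
Qed.

Lemma nodup2 : forall a b : nat, a <> b -> NoDup [a; b].
Proof. intros. constructor; [simpl; intuition|]. constructor; [simpl; auto|constructor]. Qed.

Lemma no_act0 : forall m, ~ ACT (ets h w 0) m.
Proof.
  intros m [Hm A]. apply Rabs_le_iff in A. destruct (cmR m Hm). rewrite ets0 in A. lra.
Qed.

Lemma no_actT : forall m, ~ ACT (ets h w tau) m.
Proof.
  intros m [Hm A]. apply Rabs_le_iff in A. destruct (cmR m Hm). lra.
Qed.

Lemma R2 : forall v, (v < nv GG0)%nat ->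
     match vkind GG0 v with
     | VStart =>
         indeg GG0 v = 0%nat /\ outdeg GG0 v = 1%nat /\ vtime GG0 v = ets h w 0 /\
         forall e, (e < ne GG0)%nat -> src GG0 e = v -> IC (ets h w 0) (ecomp GG0 e)
     | VEnd =>
         indeg GG0 v = 1%nat /\ outdeg GG0 v = 0%nat /\ vtime GG0 v = ets h w tau /\
         forall e, (e < ne GG0)%nat -> dst GG0 e = v -> IC (ets h w tau) (ecomp GG0 e)
     | VMerge =>
         indeg GG0 v = 2%nat /\ outdeg GG0 v = 1%nat /\
         forall e1 e2 e3, (e1 < ne GG0)%nat -> (e2 < ne GG0)%nat -> (e3 < ne GG0)%nat ->
           e1 <> e2 -> dst GG0 e1 = v -> dst GG0 e2 = v -> src GG0 e3 = v ->
           (forall y, ~ (ecomp GG0 e1 y /\ ecomp GG0 e2 y)) /\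
           sameset (ecomp GG0 e3) (fun y => ecomp GG0 e1 y \/ ecomp GG0 e2 y)
     | VSplit =>
         indeg GG0 v = 1%nat /\ outdeg GG0 v = 2%nat /\
         forall e1 e2 e3, (e1 < ne GG0)%nat -> (e2 < ne GG0)%nat -> (e3 < ne GG0)%nat ->
           e1 <> e2 -> src GG0 e1 = v -> src GG0 e2 = v -> dst GG0 e3 = v ->
           (forall y, ~ (ecomp GG0 e1 y /\ ecomp GG0 e2 y)) /\
           sameset (ecomp GG0 e3) (fun y => ecomp GG0 e1 y \/ ecomp GG0 e2 y)
     end.
Proof.
  intros v Hv. cbn in Hv |- *.
  destruct (vertex_cases h w tau Hh Hw Ht v Hv) as [Hs|[[x [Hx ->]]|[[m [Hm ->]]|[m [Hm ->]]]]].
  - destruct (vkS v Hs) as [-> ->].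
    assert (Hx0 : (0 <= Rxx v)%nat) by lia.
    split; [|split; [|split; auto]].
    + apply (deg_in v []); [constructor|simpl; tauto|]. intros e He. split; [|simpl; tauto].
      intro E. exfalso. eapply dst_not_start; eauto.
    + apply (deg_out v [eidd v 0]); [constructor; [simpl; auto|constructor]| |].
      * intros e [<-|[]]. apply eid_lt; auto.
      * intros e He. rewrite (src_start e v He Hs). simpl. intuition.
    + intros e He E. apply (src_start e v He Hs) in E. subst e.
      rewrite (comp_single_e h w tau Hh Hw Ht) by auto.
      apply (comp_single h w tau Hh Hw Ht); auto. intros m A. exfalso. eapply no_act0; eauto.
  - destruct (vkE x Hx) as [-> ->]. pose proof (Rx_pos h w tau Hh Hw Ht x).
    split; [|split; [|split; auto]].
    + apply (deg_in (n + x) [eidd x (Rxx x)]); [constructor; [simpl; auto|constructor]| |].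
      * intros e [<-|[]]. apply eid_lt; auto.
      * intros e He. rewrite (dst_end e x He Hx). simpl. intuition.
    + apply (deg_out (n + x) []); [constructor|simpl; tauto|]. intros e He. split; [|simpl; tauto].
      intro E. exfalso. eapply src_not_end; eauto.
    + intros e He E. apply (dst_end e x He Hx) in E. subst e.
      rewrite (comp_single_e h w tau Hh Hw Ht) by auto.
      apply (comp_single h w tau Hh Hw Ht); auto. intros m A. exfalso. eapply no_actT; eauto.
  - destruct (vkM m) as [-> _].
    assert (Ij : inpair h w m (mjj m)) by (unfold inpair; auto).
    assert (Ik : inpair h w m (h + mkk m)) by (unfold inpair; auto).
    destruct (rx_ok m _ Hm Ij) as [Hxj [Hrj _]]. destruct (rx_ok m _ Hm Ik) as [Hxk [Hrk _]].
    assert (Hne : eidd (mjj m) (rx (mjj m) m) <> eidd (h + mkk m) (rx (h + mkk m) m)).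
    { intro E. apply (eid_inj h w tau Hh Hw Ht) in E; try lia. destruct E as [E _]. apply (mj_ne_mk m); auto. }
    split; [|split].
    + apply (deg_in _ _ (nodup2 _ _ Hne)); [|intros; apply dst_merge; auto].
      intros e [<-|[<-|[]]]; apply eid_lt; lia.
    + apply (deg_out _ [m]); [constructor; [simpl; auto|constructor]| |].
      * intros e [<-|[]]. unfold NE. lia.
      * intros e He. rewrite (src_merge e m He Hm). simpl. intuition.
    + intros e1 e2 e3 H1 H2 H3 Hne12 D1 D2 S3.
      apply (dst_merge e1 m H1 Hm) in D1. apply (dst_merge e2 m H2 Hm) in D2.
      apply (src_merge e3 m H3 Hm) in S3. subst e3.
      destruct (pair_e h w tau m Hm) as [_ [_ ->]].
      assert (Cj : gcomp h w tau (eidd (mjj m) (rx (mjj m) m)) = (fun y => y = mjj m))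
        by (apply (comp_single_e h w tau Hh Hw Ht); auto; lia).
      assert (Ck : gcomp h w tau (eidd (h + mkk m) (rx (h + mkk m) m)) = (fun y => y = (h + mkk m)%nat))
        by (apply (comp_single_e h w tau Hh Hw Ht); auto; lia).
      pose proof (mj_ne_mk m).
      destruct D1 as [<-|[<-|[]]]; destruct D2 as [<-|[<-|[]]]; try congruence;
        rewrite Cj, Ck; unfold pairset; split; intros; try intros [? ?]; try lia; split; intros; lia.
  - destruct (vkP m) as [-> _].
    assert (Ij : inpair h w m (mjj m)) by (unfold inpair; auto).
    assert (Ik : inpair h w m (h + mkk m)) by (unfold inpair; auto).
    destruct (rx_ok m _ Hm Ij) as [Hxj [Hrj _]]. destruct (rx_ok m _ Hm Ik) as [Hxk [Hrk _]].
    assert (Hne : eidd (mjj m) (Datatypes.S (rx (mjj m) m)) <> eidd (h + mkk m) (Datatypes.S (rx (h + mkk m) m))).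
    { intro E. apply (eid_inj h w tau Hh Hw Ht) in E; try lia. destruct E as [E _]. apply (mj_ne_mk m); auto. }
    split; [|split].
    + apply (deg_in _ [m]); [constructor; [simpl; auto|constructor]| |].
      * intros e [<-|[]]. unfold NE. lia.
      * intros e He. rewrite (dst_split e m He Hm). simpl. intuition.
    + apply (deg_out _ _ (nodup2 _ _ Hne)); [|intros; apply src_split; auto].
      intros e [<-|[<-|[]]]; apply eid_lt; lia.
    + intros e1 e2 e3 H1 H2 H3 Hne12 D1 D2 S3.
      apply (src_split e1 m H1 Hm) in D1. apply (src_split e2 m H2 Hm) in D2.
      apply (dst_split e3 m H3 Hm) in S3. subst e3.
      destruct (pair_e h w tau m Hm) as [_ [_ ->]].
      assert (Cj : gcomp h w tau (eidd (mjj m) (Datatypes.S (rx (mjj m) m))) = (fun y => y = mjj m))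
        by (apply (comp_single_e h w tau Hh Hw Ht); auto; lia).
      assert (Ck : gcomp h w tau (eidd (h + mkk m) (Datatypes.S (rx (h + mkk m) m))) = (fun y => y = (h + mkk m)%nat))
        by (apply (comp_single_e h w tau Hh Hw Ht); auto; lia).
      pose proof (mj_ne_mk m).
      destruct D1 as [<-|[<-|[]]]; destruct D2 as [<-|[<-|[]]]; try congruence;
        rewrite Cj, Ck; unfold pairset; split; intros; try intros [? ?]; try lia; split; intros; lia.
Qed.

Lemma search : forall x t, (x < n)%nat -> t <= ets h w tau ->
  (forall m, ACT t m -> ~ inpair h w m x) ->
  forall d k, (k + d = Rxx x)%nat -> Ts x k <= t -> exists r, (r <= Rxx x)%nat /\ Ts x r <= t <= Td x r.
Proof.
  intros x t Hx Htt Hn d. induction d as [|d IH]; intros k Hk Hts.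
  - exists k. split; [lia|]. split; auto. unfold Td. rewrite Nat.add_0_r in Hk. subst. rewrite Nat.eqb_refl. auto.
  - destruct (Rle_dec t (Td x k)) as [Hl|Hl].
    + exists k. split; [lia|]. split; auto.
    + apply IH with (k := Datatypes.S k); [lia|]. unfold Td in Hl.
      replace (k =? Rxx x)%nat with false in Hl by (symmetry; apply Nat.eqb_neq; lia).
      destruct (G1 h w tau Hh Hw Ht x k Hx ltac:(lia)) as [Hm Ip].
      simpl. apply Rnot_le_lt in Hl.
      destruct (Rle_dec t (INR (cmm (mx x k)) + 1 / 4)) as [H2|H2]; [|lra].
      exfalso. apply (Hn (mx x k)); auto. split; auto. apply Rabs_le_iff. lra.
Qed.

Lemma R3 : forall t C, in_domain tau (ets h w) t -> IC t C ->
  exists e, (e < NEE)%nat /\ gtime h w tau (gs e) <= t <= gtime h w tau (gd e) /\ sameset (gcomp h w tau e) C.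
Proof.
  intros t C [Hd1 Hd2] HC. destruct (comp_classify h w tau Hh Hw Ht t C HC) as [[x [Hx [Hn Sx]]]|[m [A Sm]]].
  - destruct (search x t Hx Hd2 Hn (Rxx x) 0 ltac:(lia) Hd1) as [r [Hr Ht']].
    exists (eidd x r). split; [apply eid_lt; auto|].
    rewrite gs_single, gd_single by auto.
    destruct (Vsrc_ok x r Hx Hr) as [_ ->]. destruct (Vdst_ok x r Hx Hr) as [_ ->].
    split; auto. rewrite (comp_single_e h w tau Hh Hw Ht) by auto. intros y. rewrite (Sx y). tauto.
  - destruct A as [Hm A]. exists m. split; [unfold NE; lia|].
    destruct (pair_e h w tau m Hm) as [-> [-> ->]].
    destruct (vkM m) as [_ ->]. destruct (vkP m) as [_ ->]. apply Rabs_le_iff in A.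
    split; [lra|]. intros y. rewrite (Sm y). tauto.
Qed.

Lemma single_disj : forall x r r', (x < n)%nat -> (r < r')%nat -> (r' <= Rxx x)%nat -> Td x r <= Ts x r'.
Proof.
  intros x r r' Hx Hl Hr'. unfold Td. replace (r =? Rxx x)%nat with false by (symmetry; apply Nat.eqb_neq; lia).
  destruct r' as [|r']; [lia|]. simpl. pose proof (cm_le_INR x r r' Hx ltac:(lia) ltac:(lia)). lra.
Qed.

Lemma R4 : forall e e' t, (e < NEE)%nat -> (e' < NEE)%nat -> e <> e' ->
  gtime h w tau (gs e) < t < gtime h w tau (gd e) ->
  gtime h w tau (gs e') < t < gtime h w tau (gd e') ->
  ~ sameset (gcomp h w tau e) (gcomp h w tau e').
Proof.
  intros e e' t He He' Hne T1 T2 Sm.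
  destruct (edge_cases h w tau Hh Hw Ht e He) as [Hp|[x [r [Hx [Hr ->]]]]];
  destruct (edge_cases h w tau Hh Hw Ht e' He') as [Hp'|[x' [r' [Hx' [Hr' ->]]]]].
  - destruct (pair_e h w tau e Hp) as [E1 [E2 _]]. destruct (pair_e h w tau e' Hp') as [E1' [E2' _]].
    rewrite E1, E2 in T1. rewrite E1', E2' in T2.
    destruct (vkM e) as [_ V1]. destruct (vkP e) as [_ V2]. destruct (vkM e') as [_ V1']. destruct (vkP e') as [_ V2'].
    rewrite V1, V2 in T1. rewrite V1', V2' in T2.
    apply Hne. apply (active_unique h w tau Hh Hw Ht t); split; auto; apply Rabs_le_iff; lra.
  - destruct (pair_e h w tau e Hp) as [_ [_ Ec]]. rewrite Ec, (comp_single_e h w tau Hh Hw Ht) in Sm by auto.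
    assert (A1 : mjj e = x') by (apply (proj1 (Sm (mjj e))); unfold pairset; auto).
    assert (A2 : (h + mkk e)%nat = x') by (apply (proj1 (Sm (h + mkk e)%nat)); unfold pairset; auto).
    apply (mj_ne_mk e). congruence.
  - destruct (pair_e h w tau e' Hp') as [_ [_ Ec]]. rewrite Ec, (comp_single_e h w tau Hh Hw Ht) in Sm by auto.
    assert (A1 : mjj e' = x) by (apply (proj2 (Sm (mjj e'))); unfold pairset; auto).
    assert (A2 : (h + mkk e')%nat = x) by (apply (proj2 (Sm (h + mkk e')%nat)); unfold pairset; auto).
    apply (mj_ne_mk e'). congruence.
  - rewrite !(comp_single_e h w tau Hh Hw Ht) in Sm by auto.
    assert (x = x') by (apply Sm; auto). subst x'.
    rewrite !gs_single, !gd_single in * by auto.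
    destruct (Vsrc_ok x r Hx Hr) as [_ V1]. destruct (Vdst_ok x r Hx Hr) as [_ V2].
    destruct (Vsrc_ok x r' Hx Hr') as [_ V1']. destruct (Vdst_ok x r' Hx Hr') as [_ V2'].
    rewrite V1, V2 in T1. rewrite V1', V2' in T2.
    destruct (Nat.lt_total r r') as [Hl|[E|Hl]].
    + pose proof (single_disj x r r' Hx Hl Hr'). lra.
    + subst. apply Hne; auto.
    + pose proof (single_disj x r' r Hx Hl Hr). lra.
Qed.

Theorem GG_reeb : IsReebGraph n tau (ets h w) (epts h w) eeps GG0.
Proof.
  split; [|split; [|split]].
  - intros e He. cbn in He |- *. apply R1; auto.
  - exact R2.
  - intros t C Hd HC. cbn. apply R3; auto.
  - intros e e' t He He' Hne T1 T2. cbn in *. apply R4 with t; auto.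
Qed.

End Proof.


Section Low.
Variables (h w tau : nat).
Hypothesis Hh : (1 <= h)%nat.
Hypothesis Hw : (1 <= w)%nat.
Hypothesis Ht : (1 <= tau)%nat.

Local Notation n := (h + w)%nat.
Local Notation PP := (P h w tau).
Local Notation cmm := (cm h w).
Local Notation mjj := (mj h w).
Local Notation mkk := (mk w).

Lemma no_active_half : forall m m', (m < PP)%nat -> ~ active h w tau (INR (cmm m) + 1 / 2) m'.
Proof.
  intros m m' Hm [Hm' A]. apply Rabs_le_iff in A.
  destruct (Nat.le_gt_cases (cmm m') (cmm m)) as [Hl|Hl].
  - apply le_INR in Hl. lra.
  - apply INR_lt1 in Hl. lra.
Qed.

Lemma lower_ne : forall G, IsReebGraph n tau (ets h w) (epts h w) eeps G -> (PP <= ne G)%nat.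
Proof.
  intros G HR.
  apply (count_inj PP (ne G) (fun m e => (e < ne G)%nat /\
     vtime G (src G e) <= INR (cmm m) <= vtime G (dst G e) /\ sameset (ecomp G e) (pairset h w m))).
  - intros m Hm. destruct HR as [_ [_ [Hcov _]]].
    destruct (cm_real h w tau Hh Hw Ht m Hm) as [B1 B2].
    assert (A : active h w tau (INR (cmm m)) m).
    { split; auto. apply Rabs_le_iff. lra. }
    destruct (Hcov (INR (cmm m)) (pairset h w m)) as [e [He [Ti Si]]].
    + split; [rewrite ets0; lra|lra].
    + apply (comp_pair h w tau Hh Hw Ht); auto.
    + exists e. auto.
  - intros m m' e Hm Hm' [He [T S]] [_ [T' S']].
    assert (Ejk : mjj m = mjj m' /\ mkk m = mkk m').
    { pose proof (mj_lt h w tau Hh Hw Ht m). pose proof (mj_lt h w tau Hh Hw Ht m').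
      assert (P1 : pairset h w m' (mjj m)) by (apply S', S; unfold pairset; auto).
      assert (P2 : pairset h w m' (h + mkk m)%nat) by (apply S', S; unfold pairset; auto).
      unfold pairset in P1, P2. lia. }
    destruct (Nat.eq_dec (cmm m) (cmm m')) as [E|Hne].
    { apply (cm_inj h w tau Hh Hw Ht); auto. }
    exfalso.
    assert (Gen : forall a b, (a < PP)%nat -> (b < PP)%nat -> mjj a = mjj b -> mkk a = mkk b ->
      (cmm a < cmm b)%nat -> sameset (ecomp G e) (pairset h w a) ->
      vtime G (src G e) <= INR (cmm a) -> INR (cmm b) <= vtime G (dst G e) -> False).
    { intros a b Ha Hb Ej Ek Hlt Sa Ta Tb.
      apply INR_lt1 in Hlt.
      destruct HR as [Hed _]. destruct (Hed e He) as [_ [_ [_ Hc]]].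
      set (s := INR (cmm a) + 1 / 2).
      assert (IC : IsComp n tau (ets h w) (epts h w) eeps s (ecomp G e)) by (apply Hc; unfold s; lra).
      assert (Cn : conn n tau (ets h w) (epts h w) eeps s (mjj a) (h + mkk a)%nat).
      { apply (comp_conn n tau (ets h w) (epts h w) eeps s (ecomp G e)); auto; apply Sa; unfold pairset; auto. }
      apply (CS h w tau Hh Hw Ht) in Cn. destruct Cn as [E|[m'' [A _]]].
      - pose proof (mj_lt h w tau Hh Hw Ht a). lia.
      - apply (no_active_half a m'' Ha A). }
    destruct (Nat.lt_gt_cases (cmm m) (cmm m')) as [[Hl|Hl] _]; [lia| |].
    + apply (Gen m m'); auto; try tauto; try lra.
    + apply (Gen m' m); auto; try lra; destruct Ejk; auto.
Qed.

End Low.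

Theorem theorem2 :
  (* upper bound: O(tau n^2) vertices and edges *)
  (exists C : nat,
     forall (n tau : nat) (ts : nat -> R) (pts : nat -> nat -> R * R) (eps : R),
       (1 <= tau)%nat -> 0 <= eps ->
       times_increasing tau ts ->
       general_position n tau ts pts eps ->
       forall G : ReebGraph,
         IsReebGraph n tau ts pts eps G ->
         (nv G <= C * tau * n * n)%nat /\ (ne G <= C * tau * n * n)%nat) /\
  (* tightness: Omega(tau n^2) in the worst case *)
  (exists (K n0 : nat), (1 <= K)%nat /\
     forall n tau : nat, (n0 <= n)%nat -> (1 <= tau)%nat ->
       exists (ts : nat -> R) (pts : nat -> nat -> R * R) (eps : R),
         0 <= eps /\ times_increasing tau ts /\
         general_position n tau ts pts eps /\
         (exists G : ReebGraph, IsReebGraph n tau ts pts eps G) /\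
         forall G : ReebGraph, IsReebGraph n tau ts pts eps G ->
           (tau * n * n <= K * nv G)%nat /\ (tau * n * n <= K * ne G)%nat).
Proof.
  split.
  - exists 8%nat. intros n tau ts pts eps Htau Heps Hinc GP G HR.
    exact (upper n tau ts pts eps G Hinc Htau GP HR).
  - exists 16%nat, 2%nat. split; [lia|]. intros n tau Hn Htau.
    assert (Ex : exists h w, (1 <= h)%nat /\ (1 <= w)%nat /\ n = (h + w)%nat /\ (n * n <= 8 * h * w)%nat).
    { pose proof (Nat.div2_odd n) as Hd. exists (Nat.div2 n), (n - Nat.div2 n)%nat.
      assert (Hb : (Nat.b2n (Nat.odd n) <= 1)%nat) by (destruct (Nat.odd n); simpl; lia).
      split; [lia|]. split; [lia|]. split; [lia|].
      set (b := Nat.b2n (Nat.odd n)) in *. set (hh := Nat.div2 n) in *.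
      assert (n - hh = hh + b)%nat by lia. rewrite H.
      assert (1 <= hh)%nat by lia. rewrite Hd. nia. }
    destruct Ex as [h [w [Hh [Hw [-> Hsq]]]]].
    exists (ets h w), (epts h w), eeps.
    split; [unfold eeps; lra|]. split; [apply (ets_inc h w tau Hh Hw Htau)|].
    split; [apply (ex_GP h w tau Hh Hw Htau)|].
    split; [exists (GG h w tau); apply (GG_reeb h w tau Hh Hw Htau)|].
    intros G HR. pose proof (lower_ne h w tau Hh Hw Htau G HR) as L1.
    pose proof (ne_le_2nv _ _ _ _ _ G Htau HR) as L2. unfold P in L1.
    split; nia.
Qed.
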